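(* Let $k\geqslant 2$ be an integer and $\beta_k=\delta_3^{3k+1}\sigma_4^{2k+2}\sigma_3\sigma_4^{2k-1}\in B_5$, where $\delta_3=\sigma_2\sigma_1$. Then $\beta_k$ belongs to its own super summit set.
   Context: $B_5$ is the 5-strand braid group with standard generators $\sigma_1,\dots,\sigma_4$, positive monoid $B_5^+$, Garside element $\Delta=(\sigma_1\sigma_2\sigma_3\sigma_4)(\sigma_1\sigma_2\sigma_3)(\sigma_1\sigma_2)\sigma_1$. Simple braids are those $x$ with $x\in B_5^+$ and $x^{-1}\Delta\in B_5^+$; simple $s_1,s_2$ are left-weighted if no $\sigma_i$ makes both $s_1\sigma_i$ and $\sigma_i^{-1}s_2$ simple. Each $x$ has a unique left normal form $\Delta^px_1\cdots x_r$ (simple $x_i\neq1,\Delta$, consecutive ones left-weighted); $r$ is its canonical length. The super summit set of $x$ is the set of conjugates of $x$ of minimal canonical length. *)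

(* Defs.v *)
(* The braid group B_5 is modelled by its standard
   presentation: words in the letters sigma_i^{+1}, sigma_i^{-1}
   (i = 1..4, stored as i-1 : 'I_4), modulo the congruence generated by
   free cancellation and the braid relations. *)
From mathcomp Require Import all_boot all_algebra.
Set Implicit Arguments. Unset Strict Implicit. Unset Printing Implicit Defensive.

(* a letter (i, true) is sigma_{i+1}, (i, false) is sigma_{i+1}^{-1} *)
Definition letter := ('I_4 * bool)%type.
Definition word := seq letter.

Inductive braid_rel : word -> word -> Prop :=
  | rel_cancel (i : 'I_4) (b : bool) : braid_rel [:: (i, b); (i, ~~ b)] [::]
  | rel_far (i j : 'I_4) : (i.+2 <= j)%N ->
      braid_rel [:: (i, true); (j, true)] [:: (j, true); (i, true)]
  | rel_near (i j : 'I_4) : (j = i.+1 :> nat) ->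
      braid_rel [:: (i, true); (j, true); (i, true)]
                [:: (j, true); (i, true); (j, true)].

Inductive beq : word -> word -> Prop :=
  | beq_step (u v s t : word) : braid_rel s t -> beq (u ++ s ++ v) (u ++ t ++ v)
  | beq_refl (w : word) : beq w w
  | beq_sym (w1 w2 : word) : beq w1 w2 -> beq w2 w1
  | beq_trans (w1 w2 w3 : word) : beq w1 w2 -> beq w2 w3 -> beq w1 w3.

Definition winv (w : word) : word := rev (map (fun l => (l.1, ~~ l.2)) w).

Definition sigma (i : nat) : word := [:: (inord i.-1 : 'I_4, true)].

Definition wpow (w : word) (n : nat) : word := flatten (nseq n w).

Definition Delta : word :=
  sigma 1 ++ sigma 2 ++ sigma 3 ++ sigma 4 ++
  sigma 1 ++ sigma 2 ++ sigma 3 ++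
  sigma 1 ++ sigma 2 ++ sigma 1.

Definition Delta_pow (p : int) : word :=
  match p with
  | Posz n => wpow Delta n
  | Negz n => wpow (winv Delta) n.+1
  end.

Definition positive (x : word) : Prop :=
  exists u : word, all (fun l : letter => l.2) u /\ beq x u.

Definition simple (x : word) : Prop := positive x /\ positive (winv x ++ Delta).

Definition left_weighted (s1 s2 : word) : Prop :=
  ~ exists i : 'I_4, simple (s1 ++ [:: (i, true)]) /\ simple ([:: (i, false)] ++ s2).

Definition left_normal_form (x : word) (p : int) (xs : seq word) : Prop :=
  [/\ beq x (Delta_pow p ++ flatten xs),
      forall s, s \in xs -> [/\ simple s, ~ beq s [::] & ~ beq s Delta]
    & forall i, (i.+1 < size xs)%N -> left_weighted (nth [::] xs i) (nth [::] xs i.+1)].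

Definition canonical_length (x : word) (r : nat) : Prop :=
  exists p xs, left_normal_form x p xs /\ size xs = r.

Definition conjugate (x y : word) : Prop :=
  exists c : word, beq y (winv c ++ x ++ c).

Definition in_super_summit_set (y x : word) : Prop :=
  conjugate x y /\
  exists r, canonical_length y r /\
    forall z r', conjugate x z -> canonical_length z r' -> (r <= r')%N.

Definition delta3 : word := sigma 2 ++ sigma 1.

Definition beta (k : nat) : word :=
  wpow delta3 (3 * k + 1) ++ wpow (sigma 4) (2 * k + 2) ++ sigma 3 ++
  wpow (sigma 4) (2 * k - 1).

(* Main.v *)
From HB Require Import structures.
From mathcomp Require Import all_boot all_algebra.
From mathcomp.zify Require Import ssrZ.
From Stdlib Require Import ZArith.
Require Import Defs.
From mathcomp Require Import zify.
Set Implicit Arguments. Unset Strict Implicit. Unset Printing Implicit Defensive.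

(* The proof uses the Lawrence-Krammer representation of B_5 (specialised at
   q = -1 and q = 2), whose t-grading detects inf and sup (Krammer). *)


Lemma beq_cong u v a b : beq a b -> beq (u ++ a ++ v) (u ++ b ++ v).
Proof.
elim=> {a b} [u' v' s t hr|w|w1 w2 _ IH|w1 w2 w3 _ IH1 _ IH2].
- have E : forall x, u ++ (u' ++ x ++ v') ++ v = (u ++ u') ++ x ++ (v' ++ v).
    by move=> x; rewrite !catA.
  by rewrite !E; apply: beq_step.
- exact: beq_refl.
- exact: beq_sym.
- exact: beq_trans IH2.
Qed.

Lemma beq_catl u a b : beq a b -> beq (u ++ a) (u ++ b).
Proof. by move=> h; have := beq_cong u [::] h; rewrite !cats0. Qed.
Lemma beq_catr v a b : beq a b -> beq (a ++ v) (b ++ v).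
Proof. by move=> h; have := beq_cong [::] v h. Qed.
Lemma beq_cat a a' b b' : beq a a' -> beq b b' -> beq (a ++ b) (a' ++ b').
Proof. move=> h1 h2; apply: beq_trans (beq_catr _ h1) (beq_catl _ h2). Qed.

Lemma winv_cat u v : winv (u ++ v) = winv v ++ winv u.
Proof. by rewrite /winv map_cat rev_cat. Qed.
Lemma winvK w : winv (winv w) = w.
Proof.
rewrite /winv map_rev revK -map_comp -[RHS]map_id; apply: eq_map => -[i b] /=.
by rewrite negbK.
Qed.
Lemma winv_cons l w : winv (l :: w) = winv w ++ [:: (l.1, ~~ l.2)].
Proof. by rewrite -cat1s winv_cat. Qed.
Lemma size_winv w : size (winv w) = size w.
Proof. by rewrite /winv size_rev size_map. Qed.

Lemma beq_inv_r w : beq (w ++ winv w) [::].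
Proof.
elim: w => [|[i b] w IH] /=; first exact: beq_refl.
rewrite winv_cons /=.
apply: (@beq_trans _ ([:: (i, b)] ++ [::] ++ [:: (i, ~~ b)])).
  by rewrite catA; apply: (beq_cong [:: (i, b)] [:: (i, ~~ b)] IH).
exact: (@beq_step [::] [::] _ _ (rel_cancel i b)).
Qed.

Lemma beq_inv_l w : beq (winv w ++ w) [::].
Proof. by have := beq_inv_r (winv w); rewrite winvK. Qed.

Lemma beq_winv s t : beq s t -> beq (winv s) (winv t).
Proof.
move=> h.
apply: (@beq_trans _ (winv s ++ (t ++ winv t))).
  by have := beq_catl (winv s) (beq_sym (beq_inv_r t)); rewrite cats0.
apply: (@beq_trans _ ((winv s ++ s) ++ winv t)).
  by rewrite -catA; apply: beq_catl; apply: beq_catr; exact: beq_sym.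
by have := beq_catr (winv t) (beq_inv_l s).
Qed.

Lemma compl_of x v : beq (x ++ v) Delta -> beq (winv x ++ Delta) v.
Proof.
move=> h.
apply: (@beq_trans _ (winv x ++ (x ++ v))); first exact: beq_catl (beq_sym h).
rewrite catA; apply: (@beq_trans _ ([::] ++ v)); last exact: beq_refl.
exact: beq_catr (beq_inv_l x).
Qed.

Lemma wpowS w n : wpow w n.+1 = w ++ wpow w n. Proof. by []. Qed.
Lemma wpowD w m n : wpow w (m + n) = wpow w m ++ wpow w n.
Proof. by elim: m => [|m IH] //=; rewrite addSn wpowS IH catA. Qed.
Lemma wpowSr w n : wpow w n.+1 = wpow w n ++ w.
Proof. by rewrite -addn1 wpowD /wpow /= cats0. Qed.
Lemma winv_wpow w n : winv (wpow w n) = wpow (winv w) n.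
Proof.
elim: n => [|n IH] //; by rewrite wpowS winv_cat IH -wpowSr.
Qed.

Lemma beq_comm_pow x y n : beq (x ++ y) (y ++ x) -> beq (wpow x n ++ y) (y ++ wpow x n).
Proof.
move=> h; elim: n => [|n IH] /=; first by rewrite cats0; exact: beq_refl.
rewrite -/(wpow x n) -catA.
apply: (@beq_trans _ (x ++ (y ++ wpow x n))); first exact: beq_catl IH.
by rewrite !catA; apply: beq_catr.
Qed.

Lemma beq_pow_mix x y n : beq (x ++ y) (y ++ x) ->
  beq (wpow x n ++ wpow y n) (wpow (x ++ y) n).
Proof.
move=> h; elim: n => [|n IH]; first exact: beq_refl.
rewrite !wpowS.
have E1 : (x ++ wpow x n) ++ y ++ wpow y n = x ++ (wpow x n ++ y) ++ wpow y n.
  by rewrite !catA.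
rewrite E1.
apply: (@beq_trans _ (x ++ (y ++ wpow x n) ++ wpow y n)).
  apply: beq_catl; apply: beq_catr; exact: beq_comm_pow.
have -> : x ++ (y ++ wpow x n) ++ wpow y n = (x ++ y) ++ (wpow x n ++ wpow y n).
  by rewrite !catA.
exact: beq_catl IH.
Qed.

Lemma beq_pow x y n : beq x y -> beq (wpow x n) (wpow y n).
Proof.
move=> h; elim: n => [|n IH]; first exact: beq_refl.
by rewrite !wpowS; apply: beq_cat.
Qed.

Lemma wpowM w m n : wpow w (m * n) = wpow (wpow w m) n.
Proof.
elim: n => [|n IH]; first by rewrite muln0.
by rewrite mulnS wpowD IH wpowS.
Qed.


Lemma bstep (u v s t w : word) : braid_rel s t -> beq (u ++ t ++ v) w -> beq (u ++ s ++ v) w.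
Proof. move=> h1 h2; exact: beq_trans (beq_step u v h1) h2. Qed.
Lemma bstepr (u v s t w : word) : braid_rel t s -> beq (u ++ t ++ v) w -> beq (u ++ s ++ v) w.
Proof. move=> h1 h2; exact: beq_trans (beq_sym (beq_step u v h1)) h2. Qed.

Lemma far_ij (i j : nat) : (i.+2 <= j)%nat = true -> (j < 4)%nat = true ->
  braid_rel [:: (inord i, true); (inord j, true)] [:: (inord j, true); (inord i, true)].
Proof.
move=> h1 h2; apply: rel_far; rewrite !inordK; lia.
Qed.

Lemma near_i (i : nat) : (i < 3)%nat = true ->
  braid_rel [:: (inord i, true); (inord i.+1, true); (inord i, true)]
            [:: (inord i.+1, true); (inord i, true); (inord i.+1, true)].
Proof.
move=> h; apply: rel_near; rewrite !inordK; lia.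
Qed.
Lemma ch_d3cube : beq [:: (inord 1, true); (inord 0, true); (inord 1, true); (inord 0, true); (inord 1, true); (inord 0, true)] [:: (inord 0, true); (inord 1, true); (inord 0, true); (inord 0, true); (inord 1, true); (inord 0, true)].
Proof.
apply: (@bstepr [:: ] [:: (inord 0, true); (inord 1, true); (inord 0, true)] _ _ _ (@near_i 0 erefl)).
exact: beq_refl.
Qed.

Lemma ch_s4d3 : beq [:: (inord 3, true); (inord 1, true); (inord 0, true)] [:: (inord 1, true); (inord 0, true); (inord 3, true)].
Proof.
apply: (@bstepr [:: ] [:: (inord 0, true)] _ _ _ (@far_ij 1 3 erefl erefl)).
apply: (@bstepr [:: (inord 1, true)] [:: ] _ _ _ (@far_ij 0 3 erefl erefl)).
exact: beq_refl.
Qed.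

Lemma ch_D3s4 : beq [:: (inord 0, true); (inord 1, true); (inord 0, true); (inord 3, true)] [:: (inord 3, true); (inord 0, true); (inord 1, true); (inord 0, true)].
Proof.
apply: (@bstep [:: (inord 0, true); (inord 1, true)] [:: ] _ _ _ (@far_ij 0 3 erefl erefl)).
apply: (@bstep [:: (inord 0, true)] [:: (inord 0, true)] _ _ _ (@far_ij 1 3 erefl erefl)).
apply: (@bstep [:: ] [:: (inord 1, true); (inord 0, true)] _ _ _ (@far_ij 0 3 erefl erefl)).
exact: beq_refl.
Qed.

Lemma ch_tail : beq [:: (inord 1, true); (inord 0, true); (inord 3, true); (inord 3, true); (inord 2, true); (inord 3, true); (inord 3, true)] [:: (inord 1, true); (inord 0, true); (inord 2, true); (inord 3, true); (inord 2, true); (inord 2, true); (inord 3, true)].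
Proof.
apply: (@bstepr [:: (inord 1, true); (inord 0, true); (inord 3, true)] [:: (inord 3, true)] _ _ _ (@near_i 2 erefl)).
apply: (@bstepr [:: (inord 1, true); (inord 0, true)] [:: (inord 2, true); (inord 3, true)] _ _ _ (@near_i 2 erefl)).
exact: beq_refl.
Qed.

Definition v_a : word := [:: (inord 2, true); (inord 1, true); (inord 0, true); (inord 3, true); (inord 2, true); (inord 1, true)].
Lemma ch_compl_a : beq [:: (inord 0, true); (inord 1, true); (inord 0, true); (inord 3, true); (inord 2, true); (inord 1, true); (inord 0, true); (inord 3, true); (inord 2, true); (inord 1, true)] [:: (inord 0, true); (inord 1, true); (inord 2, true); (inord 3, true); (inord 0, true); (inord 1, true); (inord 2, true); (inord 0, true); (inord 1, true); (inord 0, true)].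
Proof.
apply: (@bstep [:: (inord 0, true); (inord 1, true); (inord 0, true); (inord 3, true); (inord 2, true); (inord 1, true)] [:: (inord 2, true); (inord 1, true)] _ _ _ (@far_ij 0 3 erefl erefl)).
apply: (@bstep [:: (inord 0, true); (inord 1, true); (inord 0, true); (inord 3, true); (inord 2, true)] [:: (inord 0, true); (inord 2, true); (inord 1, true)] _ _ _ (@far_ij 1 3 erefl erefl)).
apply: (@bstep [:: (inord 0, true); (inord 1, true); (inord 0, true); (inord 3, true); (inord 2, true); (inord 3, true); (inord 1, true)] [:: (inord 1, true)] _ _ _ (@far_ij 0 2 erefl erefl)).
apply: (@bstepr [:: (inord 0, true); (inord 1, true); (inord 0, true)] [:: (inord 1, true); (inord 2, true); (inord 0, true); (inord 1, true)] _ _ _ (@near_i 2 erefl)).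
apply: (@bstep [:: (inord 0, true); (inord 1, true)] [:: (inord 3, true); (inord 2, true); (inord 1, true); (inord 2, true); (inord 0, true); (inord 1, true)] _ _ _ (@far_ij 0 2 erefl erefl)).
apply: (@bstep [:: (inord 0, true); (inord 1, true); (inord 2, true)] [:: (inord 2, true); (inord 1, true); (inord 2, true); (inord 0, true); (inord 1, true)] _ _ _ (@far_ij 0 3 erefl erefl)).
apply: (@bstepr [:: (inord 0, true); (inord 1, true); (inord 2, true); (inord 3, true); (inord 0, true)] [:: (inord 0, true); (inord 1, true)] _ _ _ (@near_i 1 erefl)).
apply: (@bstepr [:: (inord 0, true); (inord 1, true); (inord 2, true); (inord 3, true); (inord 0, true); (inord 1, true); (inord 2, true)] [:: ] _ _ _ (@near_i 0 erefl)).
exact: beq_refl.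
Qed.

Definition v_b : word := [:: (inord 1, true); (inord 0, true); (inord 2, true); (inord 1, true); (inord 3, true)].
Lemma ch_compl_b : beq [:: (inord 1, true); (inord 0, true); (inord 2, true); (inord 3, true); (inord 2, true); (inord 1, true); (inord 0, true); (inord 2, true); (inord 1, true); (inord 3, true)] [:: (inord 0, true); (inord 1, true); (inord 2, true); (inord 3, true); (inord 0, true); (inord 1, true); (inord 2, true); (inord 0, true); (inord 1, true); (inord 0, true)].
Proof.
apply: (@bstep [:: (inord 1, true); (inord 0, true); (inord 2, true); (inord 3, true); (inord 2, true); (inord 1, true)] [:: (inord 1, true); (inord 3, true)] _ _ _ (@far_ij 0 2 erefl erefl)).
apply: (@bstep [:: (inord 1, true); (inord 0, true); (inord 2, true); (inord 3, true); (inord 2, true); (inord 1, true); (inord 2, true); (inord 0, true)] [:: ] _ _ _ (@far_ij 1 3 erefl erefl)).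
apply: (@bstep [:: (inord 1, true); (inord 0, true); (inord 2, true); (inord 3, true); (inord 2, true); (inord 1, true); (inord 2, true)] [:: (inord 1, true)] _ _ _ (@far_ij 0 3 erefl erefl)).
apply: (@bstepr [:: (inord 1, true); (inord 0, true); (inord 2, true); (inord 3, true)] [:: (inord 3, true); (inord 0, true); (inord 1, true)] _ _ _ (@near_i 1 erefl)).
apply: (@bstepr [:: (inord 1, true); (inord 0, true); (inord 2, true)] [:: (inord 2, true); (inord 1, true); (inord 3, true); (inord 0, true); (inord 1, true)] _ _ _ (@far_ij 1 3 erefl erefl)).
apply: (@bstep [:: (inord 1, true); (inord 0, true); (inord 2, true); (inord 1, true); (inord 3, true); (inord 2, true)] [:: (inord 0, true); (inord 1, true)] _ _ _ (@far_ij 1 3 erefl erefl)).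
apply: (@bstepr [:: (inord 1, true); (inord 0, true); (inord 2, true); (inord 1, true)] [:: (inord 1, true); (inord 0, true); (inord 1, true)] _ _ _ (@near_i 2 erefl)).
apply: (@bstepr [:: (inord 1, true); (inord 0, true)] [:: (inord 3, true); (inord 2, true); (inord 1, true); (inord 0, true); (inord 1, true)] _ _ _ (@near_i 1 erefl)).
apply: (@bstep [:: (inord 1, true); (inord 0, true); (inord 1, true); (inord 2, true)] [:: (inord 2, true); (inord 1, true); (inord 0, true); (inord 1, true)] _ _ _ (@far_ij 1 3 erefl erefl)).
apply: (@bstepr [:: ] [:: (inord 2, true); (inord 3, true); (inord 1, true); (inord 2, true); (inord 1, true); (inord 0, true); (inord 1, true)] _ _ _ (@near_i 0 erefl)).
apply: (@bstep [:: (inord 0, true); (inord 1, true)] [:: (inord 3, true); (inord 1, true); (inord 2, true); (inord 1, true); (inord 0, true); (inord 1, true)] _ _ _ (@far_ij 0 2 erefl erefl)).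
apply: (@bstep [:: (inord 0, true); (inord 1, true); (inord 2, true)] [:: (inord 1, true); (inord 2, true); (inord 1, true); (inord 0, true); (inord 1, true)] _ _ _ (@far_ij 0 3 erefl erefl)).
apply: (@bstepr [:: (inord 0, true); (inord 1, true); (inord 2, true); (inord 3, true); (inord 0, true); (inord 1, true); (inord 2, true)] [:: ] _ _ _ (@near_i 0 erefl)).
exact: beq_refl.
Qed.

Definition v_c : word := [:: (inord 0, true); (inord 1, true); (inord 0, true); (inord 2, true); (inord 1, true); (inord 0, true); (inord 3, true); (inord 2, true)].
Lemma ch_compl_c : beq [:: (inord 2, true); (inord 3, true); (inord 0, true); (inord 1, true); (inord 0, true); (inord 2, true); (inord 1, true); (inord 0, true); (inord 3, true); (inord 2, true)] [:: (inord 0, true); (inord 1, true); (inord 2, true); (inord 3, true); (inord 0, true); (inord 1, true); (inord 2, true); (inord 0, true); (inord 1, true); (inord 0, true)].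
Proof.
apply: (@bstepr [:: (inord 2, true)] [:: (inord 1, true); (inord 0, true); (inord 2, true); (inord 1, true); (inord 0, true); (inord 3, true); (inord 2, true)] _ _ _ (@far_ij 0 3 erefl erefl)).
apply: (@bstepr [:: ] [:: (inord 3, true); (inord 1, true); (inord 0, true); (inord 2, true); (inord 1, true); (inord 0, true); (inord 3, true); (inord 2, true)] _ _ _ (@far_ij 0 2 erefl erefl)).
apply: (@bstepr [:: (inord 0, true); (inord 2, true)] [:: (inord 0, true); (inord 2, true); (inord 1, true); (inord 0, true); (inord 3, true); (inord 2, true)] _ _ _ (@far_ij 1 3 erefl erefl)).
apply: (@bstepr [:: (inord 0, true); (inord 2, true); (inord 1, true)] [:: (inord 2, true); (inord 1, true); (inord 0, true); (inord 3, true); (inord 2, true)] _ _ _ (@far_ij 0 3 erefl erefl)).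
apply: (@bstep [:: (inord 0, true); (inord 2, true); (inord 1, true); (inord 0, true); (inord 3, true); (inord 2, true); (inord 1, true)] [:: (inord 2, true)] _ _ _ (@far_ij 0 3 erefl erefl)).
apply: (@bstep [:: (inord 0, true); (inord 2, true); (inord 1, true); (inord 0, true); (inord 3, true); (inord 2, true)] [:: (inord 0, true); (inord 2, true)] _ _ _ (@far_ij 1 3 erefl erefl)).
apply: (@bstep [:: (inord 0, true); (inord 2, true); (inord 1, true); (inord 0, true); (inord 3, true); (inord 2, true); (inord 3, true); (inord 1, true)] [:: ] _ _ _ (@far_ij 0 2 erefl erefl)).
apply: (@bstepr [:: (inord 0, true); (inord 2, true); (inord 1, true); (inord 0, true)] [:: (inord 1, true); (inord 2, true); (inord 0, true)] _ _ _ (@near_i 2 erefl)).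
apply: (@bstep [:: (inord 0, true); (inord 2, true); (inord 1, true)] [:: (inord 3, true); (inord 2, true); (inord 1, true); (inord 2, true); (inord 0, true)] _ _ _ (@far_ij 0 2 erefl erefl)).
apply: (@bstep [:: (inord 0, true); (inord 2, true); (inord 1, true); (inord 2, true)] [:: (inord 2, true); (inord 1, true); (inord 2, true); (inord 0, true)] _ _ _ (@far_ij 0 3 erefl erefl)).
apply: (@bstepr [:: (inord 0, true)] [:: (inord 3, true); (inord 0, true); (inord 2, true); (inord 1, true); (inord 2, true); (inord 0, true)] _ _ _ (@near_i 1 erefl)).
apply: (@bstep [:: (inord 0, true); (inord 1, true); (inord 2, true)] [:: (inord 0, true); (inord 2, true); (inord 1, true); (inord 2, true); (inord 0, true)] _ _ _ (@far_ij 1 3 erefl erefl)).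
apply: (@bstepr [:: (inord 0, true); (inord 1, true); (inord 2, true); (inord 3, true); (inord 1, true); (inord 0, true)] [:: (inord 0, true)] _ _ _ (@near_i 1 erefl)).
apply: (@bstepr [:: (inord 0, true); (inord 1, true); (inord 2, true); (inord 3, true)] [:: (inord 2, true); (inord 1, true); (inord 0, true)] _ _ _ (@near_i 0 erefl)).
apply: (@bstep [:: (inord 0, true); (inord 1, true); (inord 2, true); (inord 3, true); (inord 0, true); (inord 1, true)] [:: (inord 1, true); (inord 0, true)] _ _ _ (@far_ij 0 2 erefl erefl)).
exact: beq_refl.
Qed.

Definition v_s4 : word := [:: (inord 0, true); (inord 1, true); (inord 0, true); (inord 2, true); (inord 1, true); (inord 0, true); (inord 3, true); (inord 2, true); (inord 1, true)].
Lemma ch_compl_s4 : beq [:: (inord 3, true); (inord 0, true); (inord 1, true); (inord 0, true); (inord 2, true); (inord 1, true); (inord 0, true); (inord 3, true); (inord 2, true); (inord 1, true)] [:: (inord 0, true); (inord 1, true); (inord 2, true); (inord 3, true); (inord 0, true); (inord 1, true); (inord 2, true); (inord 0, true); (inord 1, true); (inord 0, true)].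
Proof.
apply: (@bstepr [:: ] [:: (inord 1, true); (inord 0, true); (inord 2, true); (inord 1, true); (inord 0, true); (inord 3, true); (inord 2, true); (inord 1, true)] _ _ _ (@far_ij 0 3 erefl erefl)).
apply: (@bstepr [:: (inord 0, true)] [:: (inord 0, true); (inord 2, true); (inord 1, true); (inord 0, true); (inord 3, true); (inord 2, true); (inord 1, true)] _ _ _ (@far_ij 1 3 erefl erefl)).
apply: (@bstepr [:: (inord 0, true); (inord 1, true)] [:: (inord 2, true); (inord 1, true); (inord 0, true); (inord 3, true); (inord 2, true); (inord 1, true)] _ _ _ (@far_ij 0 3 erefl erefl)).
apply: (@bstep [:: (inord 0, true); (inord 1, true); (inord 0, true); (inord 3, true); (inord 2, true); (inord 1, true)] [:: (inord 2, true); (inord 1, true)] _ _ _ (@far_ij 0 3 erefl erefl)).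
apply: (@bstep [:: (inord 0, true); (inord 1, true); (inord 0, true); (inord 3, true); (inord 2, true)] [:: (inord 0, true); (inord 2, true); (inord 1, true)] _ _ _ (@far_ij 1 3 erefl erefl)).
apply: (@bstep [:: (inord 0, true); (inord 1, true); (inord 0, true); (inord 3, true); (inord 2, true); (inord 3, true); (inord 1, true)] [:: (inord 1, true)] _ _ _ (@far_ij 0 2 erefl erefl)).
apply: (@bstepr [:: (inord 0, true); (inord 1, true); (inord 0, true)] [:: (inord 1, true); (inord 2, true); (inord 0, true); (inord 1, true)] _ _ _ (@near_i 2 erefl)).
apply: (@bstep [:: (inord 0, true); (inord 1, true)] [:: (inord 3, true); (inord 2, true); (inord 1, true); (inord 2, true); (inord 0, true); (inord 1, true)] _ _ _ (@far_ij 0 2 erefl erefl)).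
apply: (@bstep [:: (inord 0, true); (inord 1, true); (inord 2, true)] [:: (inord 2, true); (inord 1, true); (inord 2, true); (inord 0, true); (inord 1, true)] _ _ _ (@far_ij 0 3 erefl erefl)).
apply: (@bstepr [:: (inord 0, true); (inord 1, true); (inord 2, true); (inord 3, true); (inord 0, true)] [:: (inord 0, true); (inord 1, true)] _ _ _ (@near_i 1 erefl)).
apply: (@bstepr [:: (inord 0, true); (inord 1, true); (inord 2, true); (inord 3, true); (inord 0, true); (inord 1, true); (inord 2, true)] [:: ] _ _ _ (@near_i 0 erefl)).
exact: beq_refl.
Qed.


Definition wa : word := sigma 1 ++ sigma 2 ++ sigma 1 ++ sigma 4.
Definition wb : word := sigma 2 ++ sigma 1 ++ sigma 3 ++ sigma 4 ++ sigma 3.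
Definition wc : word := sigma 3 ++ sigma 4.
Definition w4 : word := sigma 4.
Definition D3 : word := sigma 1 ++ sigma 2 ++ sigma 1.
Definition nfxs (m : nat) : seq word := nseq (2 * m + 4) wa ++ [:: wb; wc] ++ nseq (2 * m + 1) w4.

Lemma beta_split m : beta m.+2 =
  wpow (wpow delta3 3) m.+2 ++ delta3 ++ wpow (sigma 4) (2 * m + 4) ++
  (wpow (sigma 4) 2 ++ sigma 3 ++ wpow (sigma 4) 2) ++ wpow (sigma 4) (2 * m + 1).
Proof.
rewrite /beta (wpowD delta3 (3 * m.+2) 1) wpowM.
rewrite (_ : (2 * m.+2 + 2 = (2 * m + 4) + 2)%nat); last by lia.
rewrite (_ : (2 * m.+2 - 1 = 2 + (2 * m + 1))%nat); last by lia.
rewrite (wpowD _ (2 * m + 4) 2) (wpowD _ 2 (2 * m + 1)).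
rewrite (_ : wpow delta3 1 = delta3); last exact: cats0.
by rewrite -!catA.
Qed.

Lemma nf_split m : flatten (nfxs m) = wpow wa (2 * m + 4) ++ wb ++ wc ++ wpow w4 (2 * m + 1).
Proof.
rewrite /nfxs !flatten_cat (_ : flatten [:: wb; wc] = wb ++ wc); last exact: (congr1 (cat wb) (cats0 wc)).
by rewrite -!catA.
Qed.

Lemma beta_nf m : beq (beta m.+2) (flatten (nfxs m)).
Proof.
rewrite beta_split nf_split.
set X1 := wpow (wpow delta3 3) m.+2.
set Z := wpow (sigma 4) (2 * m + 4).
set U := wpow (sigma 4) 2 ++ sigma 3 ++ wpow (sigma 4) 2.
set T := wpow (sigma 4) (2 * m + 1).
have hA : beq X1 (wpow D3 (2 * m + 4)).
  have -> : (2 * m + 4 = 2 * m.+2)%nat by lia.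
  rewrite /X1 wpowM; apply: beq_pow; exact: ch_d3cube.
have hB : beq (delta3 ++ Z) (Z ++ delta3).
  apply: beq_sym; apply: beq_comm_pow; exact: ch_s4d3.
have hC : beq (wpow D3 (2 * m + 4) ++ Z) (wpow wa (2 * m + 4)).
  apply: beq_pow_mix; exact: ch_D3s4.
have hD : beq (delta3 ++ U) (wb ++ wc) by exact: ch_tail.
apply: (@beq_trans _ (wpow D3 (2 * m + 4) ++ (Z ++ delta3) ++ U ++ T)).
  apply: beq_cat hA _.
  rewrite catA; apply: beq_catr; exact: hB.
have -> : wpow D3 (2 * m + 4) ++ (Z ++ delta3) ++ U ++ T =
          (wpow D3 (2 * m + 4) ++ Z) ++ (delta3 ++ U) ++ T by rewrite !catA.
rewrite [wb ++ _]catA.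
apply: beq_cat hC _; apply: beq_catr; exact: hD.
Qed.

Import GRing.Theory.
Local Open Scope ring_scope.



Definition cpoly := seq Z.
Fixpoint padd (a b : cpoly) : cpoly :=
  match a, b with
  | [::], _ => b
  | _, [::] => a
  | x :: a', y :: b' => Z.add x y :: padd a' b'
  end.
Definition pscale (c : Z) (b : cpoly) : cpoly := map (Z.mul c) b.
Fixpoint pmul (a b : cpoly) : cpoly :=
  match a with
  | [::] => [::]
  | x :: a' => padd (pscale x b) (Z0 :: pmul a' b)
  end.
Definition ip (s : cpoly) : {poly Z} := foldr (fun c p => c%:P + 'X * p) 0 s.

Lemma ip_nil : ip [::] = 0. Proof. by []. Qed.
Lemma ip_cons c s : ip (c :: s) = c%:P + 'X * ip s. Proof. by []. Qed.

Lemma ip_padd a b : ip (padd a b) = ip a + ip b.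
Proof.
elim: a b => [|x a IH] [|y b] /=; rewrite ?add0r ?addr0 //.
have ->: Z.add x y = (x + y)%R by [].
by rewrite IH polyCD mulrDr addrACA.
Qed.

Lemma ip_pscale c b : ip (pscale c b) = c%:P * ip b.
Proof.
elim: b => [|y b IH] /=; first by rewrite mulr0.
have ->: Z.mul c y = (c * y)%R by [].
by rewrite IH polyCM mulrDr mulrCA.
Qed.

Lemma ip_pmul a b : ip (pmul a b) = ip a * ip b.
Proof.
elim: a => [|x a IH] /=; first by rewrite mul0r.
rewrite ip_padd ip_pscale /= IH.
have ->: (Z0%:P : {poly Z}) = 0 by [].
by rewrite add0r mulrDl mulrA.
Qed.

Lemma coef_ip s d : (ip s)`_d = nth Z0 s d.
Proof.
elim: s d => [|c s IH] d /=; first by rewrite coef0 nth_nil.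
rewrite coefD coefC coefXM; case: d => [|d] /=; first by rewrite addr0.
by rewrite add0r IH.
Qed.

Fixpoint cnorm (s : cpoly) : cpoly :=
  match s with
  | [::] => [::]
  | c :: s' => let r := cnorm s' in
      if (r == [::]) && (Z.eqb c Z0) then [::] else c :: r
  end.

Lemma ip_cnorm s : ip (cnorm s) = ip s.
Proof.
elim: s => [|c s IH] //=.
case: ifP => [/andP[/eqP E /Z.eqb_spec ->]|_] /=; last by rewrite IH.
by rewrite -IH E /= mulr0 addr0.
Qed.

Lemma ip_csum_map (T : Type) (f : T -> cpoly) l :
  ip (foldr padd [::] (map f l)) = \sum_(k <- l) ip (f k).
Proof.
elim: l => [|x l IH] /=; first by rewrite big_nil.
by rewrite big_cons ip_padd IH.
Qed.

Definition cmat := seq (seq cpoly).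
Definition ent (M : cmat) (i j : nat) : cpoly := nth [::] (nth [::] M i) j.
Definition csum (l : seq cpoly) := foldr padd [::] l.
Definition cmm (A B : cmat) : cmat :=
  mkseq (fun i => mkseq (fun j =>
     csum (mkseq (fun k => pmul (ent A i k) (ent B k j)) 10)) 10) 10.
Definition im (M : cmat) : 'M[{poly Z}]_10 := \matrix_(i, j) ip (ent M i j).

Lemma ip_csum_mkseq f n : ip (csum (mkseq f n)) = \sum_(k < n) ip (f k).
Proof.
by rewrite /csum /mkseq ip_csum_map -(big_mkord xpredT (fun k => ip (f k))) /index_iota subn0.
Qed.

Lemma ent_mk (f : nat -> nat -> cpoly) (i j : nat) : (i < 10)%nat -> (j < 10)%nat ->
  ent (mkseq (fun i => mkseq (fun j => f i j) 10) 10) i j = f i j.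
Proof. by move=> hi hj; rewrite /ent nth_mkseq // nth_mkseq. Qed.

Lemma im_mul A B : im (cmm A B) = im A *m im B.
Proof.
apply/matrixP => i j; rewrite !mxE /cmm ent_mk // ip_csum_mkseq.
by apply: eq_bigr => k _; rewrite ip_pmul !mxE.
Qed.

Definition ceqb (A B : cmat) : bool :=
  all (fun i => all (fun j => cnorm (ent A i j) == cnorm (ent B i j)) (iota 0 10)) (iota 0 10).

Lemma ceqbP A B : ceqb A B -> im A = im B.
Proof.
move=> /allP H; apply/matrixP => i j; rewrite !mxE.
have hi : nat_of_ord i \in iota 0 10 by rewrite mem_iota leq0n add0n ltn_ord.
have hj : nat_of_ord j \in iota 0 10 by rewrite mem_iota leq0n add0n ltn_ord.
have /allP H2 := H i hi.
by move/eqP: (H2 j hj) => E; rewrite -ip_cnorm E ip_cnorm.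
Qed.

Lemma im_coef M (i j : 'I_10) d : ((im M) i j)`_d = nth Z0 (ent M i j) d.
Proof. by rewrite mxE coef_ip. Qed.

Definition cdiffb (A B : cmat) (D : nat) : bool :=
  has (fun i => has (fun j => has (fun d => nth Z0 (ent A i j) d != nth Z0 (ent B i j) d)
     (iota 0 D)) (iota 0 10)) (iota 0 10).

Lemma cdiffbP A B D : cdiffb A B D -> im A <> im B.
Proof.
move=> /hasP[i]; rewrite mem_iota add0n => /andP[_ hi] /hasP[j]; rewrite mem_iota add0n => /andP[_ hj].
move=> /hasP[d _] /eqP H E; apply: H.
have := congr1 (fun M : 'M[{poly Z}]_10 => (M (Ordinal hi) (Ordinal hj))`_d) E.
by rewrite /= !im_coef.
Qed.

Definition lowb (M : cmat) (m : nat) : bool :=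
  has (fun i => has (fun j => has (fun d => nth Z0 (ent M i j) d != Z0)
     (iota 0 m)) (iota 0 10)) (iota 0 10).

Lemma lowbP M m : lowb M m -> forall B : 'M[{poly Z}]_10, im M <> 'X^m *: B.
Proof.
move=> /hasP[i]; rewrite mem_iota add0n => /andP[_ hi] /hasP[j]; rewrite mem_iota add0n => /andP[_ hj].
move=> /hasP[d]; rewrite mem_iota add0n => /andP[_ hd] /eqP H B E; apply: H.
have := congr1 (fun M : 'M[{poly Z}]_10 => (M (Ordinal hi) (Ordinal hj))`_d) E.
by rewrite /= im_coef mxE coefXnM hd.
Qed.

Definition cmk (f : nat -> nat -> cpoly) : cmat := mkseq (fun i => mkseq (fun j => f i j) 10) 10.

Lemma im_cmk f : im (cmk f) = \matrix_(i, j) ip (f i j).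
Proof. by apply/matrixP => i j; rewrite !mxE /cmk ent_mk. Qed.

Definition cshift (n : nat) (M : cmat) : cmat := cmk (fun i j => nseq n Z0 ++ ent M i j).

Lemma ip_shift n p : ip (nseq n Z0 ++ p) = 'X^n * ip p.
Proof.
elim: n => [|n IH] /=; first by rewrite mul1r.
have ->: (Z0%:P : {poly Z}) = 0 by [].
by rewrite add0r IH exprS mulrA.
Qed.

Lemma im_shift n M : im (cshift n M) = 'X^n *: im M.
Proof. by apply/matrixP => i j; rewrite im_cmk !mxE ip_shift. Qed.

Definition cdiag (p : cpoly) : cmat := cmk (fun i j => if i == j then p else [::]).

Lemma im_cdiag p : im (cdiag p) = ip p *: 1%:M.
Proof.
apply/matrixP => i j; rewrite im_cmk !mxE.
case: (i =P j) => [->|/eqP h]; first by rewrite !eqxx mulr1.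
have h' : (nat_of_ord i == nat_of_ord j) = false by apply/negbTE.
by rewrite h' mulr0.
Qed.

Definition cid : cmat := cdiag [:: 1%Z].
Lemma im_cid : im cid = 1%:M.
Proof. by rewrite /cid im_cdiag /= mulr0 addr0 scale1r. Qed.


Definition negc (w : word) : nat := count (fun l : letter => ~~ l.2) w.

Section Rep.
Variable Lm : letter -> cmat.
Variable sc : cpoly.
Hypothesis hc : forall (i : 'I_4) b, ceqb (cmm (Lm (i, b)) (Lm (i, ~~ b))) (cdiag sc).
Hypothesis hf : forall i j : 'I_4, (i.+2 <= j)%nat ->
  ceqb (cmm (Lm (i, true)) (Lm (j, true))) (cmm (Lm (j, true)) (Lm (i, true))).
Hypothesis hn : forall i j : 'I_4, (j = i.+1 :> nat) ->
  ceqb (cmm (cmm (Lm (i, true)) (Lm (j, true))) (Lm (i, true)))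
       (cmm (cmm (Lm (j, true)) (Lm (i, true))) (Lm (j, true))).
Hypothesis hs : ip sc != 0.

Definition Phi (w : word) : 'M[{poly Z}]_10 := foldr (fun l A => im (Lm l) *m A) 1%:M w.

Lemma Phi_cat u v : Phi (u ++ v) = Phi u *m Phi v.
Proof. by elim: u => [|l u IH] /=; rewrite ?mul1mx // IH mulmxA. Qed.

Lemma Phi_nil : Phi [::] = 1%:M. Proof. by []. Qed.

Lemma Phi_wpow w n : Phi (wpow w n) = Phi w ^+ n.
Proof.
elim: n => [|n IH]; first by rewrite expr0.
by rewrite /wpow /= Phi_cat -/(wpow w n) IH exprS.
Qed.

Definition cprod (w : word) : cmat := foldr (fun l A => cmm (Lm l) A) cid w.

Lemma Phi_cprod w : Phi w = im (cprod w).
Proof. by elim: w => [|l w IH] /=; rewrite ?im_cid // im_mul IH. Qed.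

Local Notation s := (ip sc).

Lemma scale_inj (c : {poly Z}) (A B : 'M[{poly Z}]_10) : c != 0 -> c *: A = c *: B -> A = B.
Proof.
move=> hc0 E; apply/matrixP => i j.
have := congr1 (fun M : 'M[{poly Z}]_10 => M i j) E; rewrite /= !mxE.
by move/(mulfI hc0).
Qed.

Lemma rel_Phi a b : braid_rel a b -> s ^+ negc b *: Phi a = s ^+ negc a *: Phi b.
Proof.
case=> [i bb|i j hij|i j hij].
- have -> : negc [:: (i, bb); (i, ~~ bb)] = 1%nat by rewrite /negc /=; case: bb.
  by rewrite /= expr0 expr1 scale1r mulmx1 -im_mul (ceqbP (hc i bb)) im_cdiag.
- rewrite /negc /= !expr0 !scale1r !mulmx1 -!im_mul; exact: ceqbP (hf hij).
- rewrite /negc /= !expr0 !scale1r !mulmx1 !mulmxA -!im_mul; exact: ceqbP (hn hij).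
Qed.

Lemma negc_cat u v : negc (u ++ v) = (negc u + negc v)%nat.
Proof. by rewrite /negc count_cat. Qed.

Lemma Phi_beq w1 w2 : beq w1 w2 -> s ^+ negc w2 *: Phi w1 = s ^+ negc w1 *: Phi w2.
Proof.
elim=> {w1 w2} [u v a b hr|w|w1 w2 _ IH|w1 w2 w3 _ IH1 _ IH2].
- rewrite !negc_cat !Phi_cat.
  have E := rel_Phi hr.
  have key : forall (c : {poly Z}) n (A B C : 'M[{poly Z}]_10),
      c *: (A *m ((s ^+ n *: B) *m C)) = (c * s ^+ n) *: (A *m (B *m C)).
    by move=> c n A B C; rewrite -scalemxAl -scalemxAr scalerA.
  rewrite !exprD mulrCA [s ^+ negc b * _]mulrC -key E.
  by rewrite key [in RHS]mulrCA [s ^+ negc a * _]mulrC.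
- by [].
- by rewrite IH.
- apply: (@scale_inj (s ^+ negc w2)); first by rewrite expf_neq0.
  have sw : forall (x y : {poly Z}) (M : 'M[{poly Z}]_10), x *: (y *: M) = y *: (x *: M).
    by move=> x y M; rewrite !scalerA mulrC.
  by rewrite sw IH1 sw IH2 sw.
Qed.

End Rep.

Definition vals (w : word) : seq (nat * bool) := map (fun l : letter => (nat_of_ord l.1, l.2)) w.
Definition cprodN (LmN : nat * bool -> cmat) (ps : seq (nat * bool)) : cmat :=
  foldr (fun p A => cmm (LmN p) A) cid ps.
Lemma cprod_vals (LmN : nat * bool -> cmat) w :
  cprod (fun l : letter => LmN (nat_of_ord l.1, l.2)) w = cprodN LmN (vals w).
Proof. by elim: w => [|l w IH] //=; rewrite IH. Qed.
Lemma vals_cat u v : vals (u ++ v) = vals u ++ vals v. Proof. exact: map_cat. Qed.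
Lemma vals_sigma i : (i < 4)%nat -> vals (sigma i.+1) = [:: (i, true)].
Proof. by move=> h; rewrite /vals /sigma /= inordK. Qed.
Lemma vals_winv w : vals (winv w) = rev (map (fun p : nat * bool => (p.1, ~~ p.2)) (vals w)).
Proof. by rewrite /vals /winv map_rev -!map_comp. Qed.


Definition GM1 : cmat :=
 [:: [:: [:: 0%Z; 1%Z]; [:: 0%Z; 2%Z]; [:: 0%Z; 2%Z]; [:: 0%Z; 2%Z]; [::]; [::]; [::]; [::]; [::]; [::]];
  [:: [::]; [::]; [::]; [::]; [:: 1%Z]; [::]; [::]; [::]; [::]; [::]];
  [:: [::]; [::]; [::]; [::]; [::]; [:: 1%Z]; [::]; [::]; [::]; [::]];
  [:: [::]; [::]; [::]; [::]; [::]; [::]; [:: 1%Z]; [::]; [::]; [::]];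
  [:: [::]; [:: (-1)%Z]; [::]; [::]; [:: 2%Z]; [::]; [::]; [::]; [::]; [::]];
  [:: [::]; [::]; [:: (-1)%Z]; [::]; [::]; [:: 2%Z]; [::]; [::]; [::]; [::]];
  [:: [::]; [::]; [::]; [:: (-1)%Z]; [::]; [::]; [:: 2%Z]; [::]; [::]; [::]];
  [:: [::]; [::]; [::]; [::]; [::]; [::]; [::]; [:: 1%Z]; [::]; [::]];
  [:: [::]; [::]; [::]; [::]; [::]; [::]; [::]; [::]; [:: 1%Z]; [::]];
  [:: [::]; [::]; [::]; [::]; [::]; [::]; [::]; [::]; [::]; [:: 1%Z]]].
Definition HM1 : cmat :=
 [:: [:: [:: 1%Z]; [:: 0%Z; (-4)%Z]; [:: 0%Z; (-4)%Z]; [:: 0%Z; (-4)%Z]; [:: 0%Z; 2%Z]; [:: 0%Z; 2%Z]; [:: 0%Z; 2%Z]; [::]; [::]; [::]];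
  [:: [::]; [:: 0%Z; 2%Z]; [::]; [::]; [:: 0%Z; (-1)%Z]; [::]; [::]; [::]; [::]; [::]];
  [:: [::]; [::]; [:: 0%Z; 2%Z]; [::]; [::]; [:: 0%Z; (-1)%Z]; [::]; [::]; [::]; [::]];
  [:: [::]; [::]; [::]; [:: 0%Z; 2%Z]; [::]; [::]; [:: 0%Z; (-1)%Z]; [::]; [::]; [::]];
  [:: [::]; [:: 0%Z; 1%Z]; [::]; [::]; [::]; [::]; [::]; [::]; [::]; [::]];
  [:: [::]; [::]; [:: 0%Z; 1%Z]; [::]; [::]; [::]; [::]; [::]; [::]; [::]];
  [:: [::]; [::]; [::]; [:: 0%Z; 1%Z]; [::]; [::]; [::]; [::]; [::]; [::]];
  [:: [::]; [::]; [::]; [::]; [::]; [::]; [::]; [:: 0%Z; 1%Z]; [::]; [::]];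
  [:: [::]; [::]; [::]; [::]; [::]; [::]; [::]; [::]; [:: 0%Z; 1%Z]; [::]];
  [:: [::]; [::]; [::]; [::]; [::]; [::]; [::]; [::]; [::]; [:: 0%Z; 1%Z]]].
Definition GM2 : cmat :=
 [:: [:: [:: 2%Z]; [:: 1%Z]; [::]; [::]; [::]; [::]; [::]; [::]; [::]; [::]];
  [:: [:: (-1)%Z]; [::]; [::]; [::]; [::]; [::]; [::]; [::]; [::]; [::]];
  [:: [::]; [::]; [:: 1%Z]; [::]; [::]; [::]; [::]; [::]; [::]; [::]];
  [:: [::]; [::]; [::]; [:: 1%Z]; [::]; [::]; [::]; [::]; [::]; [::]];
  [:: [::]; [:: 0%Z; (-2)%Z]; [:: 0%Z; (-4)%Z]; [:: 0%Z; (-4)%Z]; [:: 0%Z; 1%Z]; [:: 0%Z; 2%Z]; [:: 0%Z; 2%Z]; [::]; [::]; [::]];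
  [:: [::]; [::]; [::]; [::]; [::]; [::]; [::]; [:: 1%Z]; [::]; [::]];
  [:: [::]; [::]; [::]; [::]; [::]; [::]; [::]; [::]; [:: 1%Z]; [::]];
  [:: [::]; [::]; [::]; [::]; [::]; [:: (-1)%Z]; [::]; [:: 2%Z]; [::]; [::]];
  [:: [::]; [::]; [::]; [::]; [::]; [::]; [:: (-1)%Z]; [::]; [:: 2%Z]; [::]];
  [:: [::]; [::]; [::]; [::]; [::]; [::]; [::]; [::]; [::]; [:: 1%Z]]].
Definition HM2 : cmat :=
 [:: [:: [::]; [:: 0%Z; (-1)%Z]; [::]; [::]; [::]; [::]; [::]; [::]; [::]; [::]];
  [:: [:: 0%Z; 1%Z]; [:: 0%Z; 2%Z]; [::]; [::]; [::]; [::]; [::]; [::]; [::]; [::]];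
  [:: [::]; [::]; [:: 0%Z; 1%Z]; [::]; [::]; [::]; [::]; [::]; [::]; [::]];
  [:: [::]; [::]; [::]; [:: 0%Z; 1%Z]; [::]; [::]; [::]; [::]; [::]; [::]];
  [:: [:: 0%Z; 2%Z]; [:: 0%Z; 4%Z]; [:: 0%Z; 4%Z]; [:: 0%Z; 4%Z]; [:: 1%Z]; [:: 0%Z; (-4)%Z]; [:: 0%Z; (-4)%Z]; [:: 0%Z; 2%Z]; [:: 0%Z; 2%Z]; [::]];
  [:: [::]; [::]; [::]; [::]; [::]; [:: 0%Z; 2%Z]; [::]; [:: 0%Z; (-1)%Z]; [::]; [::]];
  [:: [::]; [::]; [::]; [::]; [::]; [::]; [:: 0%Z; 2%Z]; [::]; [:: 0%Z; (-1)%Z]; [::]];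
  [:: [::]; [::]; [::]; [::]; [::]; [:: 0%Z; 1%Z]; [::]; [::]; [::]; [::]];
  [:: [::]; [::]; [::]; [::]; [::]; [::]; [:: 0%Z; 1%Z]; [::]; [::]; [::]];
  [:: [::]; [::]; [::]; [::]; [::]; [::]; [::]; [::]; [::]; [:: 0%Z; 1%Z]]].
Definition GM3 : cmat :=
 [:: [:: [:: 1%Z]; [::]; [::]; [::]; [::]; [::]; [::]; [::]; [::]; [::]];
  [:: [::]; [:: 2%Z]; [:: 1%Z]; [::]; [::]; [::]; [::]; [::]; [::]; [::]];
  [:: [::]; [:: (-1)%Z]; [::]; [::]; [::]; [::]; [::]; [::]; [::]; [::]];
  [:: [::]; [::]; [::]; [:: 1%Z]; [::]; [::]; [::]; [::]; [::]; [::]];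
  [:: [::]; [::]; [::]; [::]; [:: 2%Z]; [:: 1%Z]; [::]; [::]; [::]; [::]];
  [:: [::]; [::]; [::]; [::]; [:: (-1)%Z]; [::]; [::]; [::]; [::]; [::]];
  [:: [::]; [::]; [::]; [::]; [::]; [::]; [:: 1%Z]; [::]; [::]; [::]];
  [:: [::]; [::]; [:: 0%Z; 2%Z]; [:: 0%Z; 4%Z]; [::]; [:: 0%Z; (-2)%Z]; [:: 0%Z; (-4)%Z]; [:: 0%Z; 1%Z]; [:: 0%Z; 2%Z]; [::]];
  [:: [::]; [::]; [::]; [::]; [::]; [::]; [::]; [::]; [::]; [:: 1%Z]];
  [:: [::]; [::]; [::]; [::]; [::]; [::]; [::]; [::]; [:: (-1)%Z]; [:: 2%Z]]].
Definition HM3 : cmat :=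
 [:: [:: [:: 0%Z; 1%Z]; [::]; [::]; [::]; [::]; [::]; [::]; [::]; [::]; [::]];
  [:: [::]; [::]; [:: 0%Z; (-1)%Z]; [::]; [::]; [::]; [::]; [::]; [::]; [::]];
  [:: [::]; [:: 0%Z; 1%Z]; [:: 0%Z; 2%Z]; [::]; [::]; [::]; [::]; [::]; [::]; [::]];
  [:: [::]; [::]; [::]; [:: 0%Z; 1%Z]; [::]; [::]; [::]; [::]; [::]; [::]];
  [:: [::]; [::]; [::]; [::]; [::]; [:: 0%Z; (-1)%Z]; [::]; [::]; [::]; [::]];
  [:: [::]; [::]; [::]; [::]; [:: 0%Z; 1%Z]; [:: 0%Z; 2%Z]; [::]; [::]; [::]; [::]];
  [:: [::]; [::]; [::]; [::]; [::]; [::]; [:: 0%Z; 1%Z]; [::]; [::]; [::]];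
  [:: [::]; [:: 0%Z; (-2)%Z]; [:: 0%Z; (-4)%Z]; [:: 0%Z; (-4)%Z]; [:: 0%Z; 2%Z]; [:: 0%Z; 4%Z]; [:: 0%Z; 4%Z]; [:: 1%Z]; [:: 0%Z; (-4)%Z]; [:: 0%Z; 2%Z]];
  [:: [::]; [::]; [::]; [::]; [::]; [::]; [::]; [::]; [:: 0%Z; 2%Z]; [:: 0%Z; (-1)%Z]];
  [:: [::]; [::]; [::]; [::]; [::]; [::]; [::]; [::]; [:: 0%Z; 1%Z]; [::]]].
Definition GM4 : cmat :=
 [:: [:: [:: 1%Z]; [::]; [::]; [::]; [::]; [::]; [::]; [::]; [::]; [::]];
  [:: [::]; [:: 1%Z]; [::]; [::]; [::]; [::]; [::]; [::]; [::]; [::]];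
  [:: [::]; [::]; [:: 2%Z]; [:: 1%Z]; [::]; [::]; [::]; [::]; [::]; [::]];
  [:: [::]; [::]; [:: (-1)%Z]; [::]; [::]; [::]; [::]; [::]; [::]; [::]];
  [:: [::]; [::]; [::]; [::]; [:: 1%Z]; [::]; [::]; [::]; [::]; [::]];
  [:: [::]; [::]; [::]; [::]; [::]; [:: 2%Z]; [:: 1%Z]; [::]; [::]; [::]];
  [:: [::]; [::]; [::]; [::]; [::]; [:: (-1)%Z]; [::]; [::]; [::]; [::]];
  [:: [::]; [::]; [::]; [::]; [::]; [::]; [::]; [:: 2%Z]; [:: 1%Z]; [::]];
  [:: [::]; [::]; [::]; [::]; [::]; [::]; [::]; [:: (-1)%Z]; [::]; [::]];
  [:: [::]; [::]; [::]; [:: 0%Z; (-2)%Z]; [::]; [::]; [:: 0%Z; 2%Z]; [::]; [:: 0%Z; (-2)%Z]; [:: 0%Z; 1%Z]]].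
Definition HM4 : cmat :=
 [:: [:: [:: 0%Z; 1%Z]; [::]; [::]; [::]; [::]; [::]; [::]; [::]; [::]; [::]];
  [:: [::]; [:: 0%Z; 1%Z]; [::]; [::]; [::]; [::]; [::]; [::]; [::]; [::]];
  [:: [::]; [::]; [::]; [:: 0%Z; (-1)%Z]; [::]; [::]; [::]; [::]; [::]; [::]];
  [:: [::]; [::]; [:: 0%Z; 1%Z]; [:: 0%Z; 2%Z]; [::]; [::]; [::]; [::]; [::]; [::]];
  [:: [::]; [::]; [::]; [::]; [:: 0%Z; 1%Z]; [::]; [::]; [::]; [::]; [::]];
  [:: [::]; [::]; [::]; [::]; [::]; [::]; [:: 0%Z; (-1)%Z]; [::]; [::]; [::]];
  [:: [::]; [::]; [::]; [::]; [::]; [:: 0%Z; 1%Z]; [:: 0%Z; 2%Z]; [::]; [::]; [::]];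
  [:: [::]; [::]; [::]; [::]; [::]; [::]; [::]; [::]; [:: 0%Z; (-1)%Z]; [::]];
  [:: [::]; [::]; [::]; [::]; [::]; [::]; [::]; [:: 0%Z; 1%Z]; [:: 0%Z; 2%Z]; [::]];
  [:: [::]; [::]; [:: 0%Z; 2%Z]; [:: 0%Z; 4%Z]; [::]; [:: 0%Z; (-2)%Z]; [:: 0%Z; (-4)%Z]; [:: 0%Z; 2%Z]; [:: 0%Z; 4%Z]; [:: 1%Z]]].
Definition LmMN (p : nat * bool) : cmat :=
  match p with
  | (0, true) => GM1 | (1, true) => GM2 | (2, true) => GM3 | (3, true) => GM4
  | (0, false) => HM1 | (1, false) => HM2 | (2, false) => HM3 | (3, false) => HM4
  | _ => cid end.
Definition LmM (l : letter) : cmat := LmMN (nat_of_ord l.1, l.2).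
Definition GT1 : cmat :=
 [:: [:: [:: 0%Z; 4%Z]; [:: 0%Z; 2%Z]; [:: 0%Z; 2%Z]; [:: 0%Z; 2%Z]; [::]; [::]; [::]; [::]; [::]; [::]];
  [:: [::]; [::]; [::]; [::]; [:: 1%Z]; [::]; [::]; [::]; [::]; [::]];
  [:: [::]; [::]; [::]; [::]; [::]; [:: 1%Z]; [::]; [::]; [::]; [::]];
  [:: [::]; [::]; [::]; [::]; [::]; [::]; [:: 1%Z]; [::]; [::]; [::]];
  [:: [::]; [:: 2%Z]; [::]; [::]; [:: (-1)%Z]; [::]; [::]; [::]; [::]; [::]];
  [:: [::]; [::]; [:: 2%Z]; [::]; [::]; [:: (-1)%Z]; [::]; [::]; [::]; [::]];
  [:: [::]; [::]; [::]; [:: 2%Z]; [::]; [::]; [:: (-1)%Z]; [::]; [::]; [::]];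
  [:: [::]; [::]; [::]; [::]; [::]; [::]; [::]; [:: 1%Z]; [::]; [::]];
  [:: [::]; [::]; [::]; [::]; [::]; [::]; [::]; [::]; [:: 1%Z]; [::]];
  [:: [::]; [::]; [::]; [::]; [::]; [::]; [::]; [::]; [::]; [:: 1%Z]]].
Definition HT1 : cmat :=
 [:: [:: [:: 1%Z]; [:: 0%Z; (-1)%Z]; [:: 0%Z; (-1)%Z]; [:: 0%Z; (-1)%Z]; [:: 0%Z; (-1)%Z]; [:: 0%Z; (-1)%Z]; [:: 0%Z; (-1)%Z]; [::]; [::]; [::]];
  [:: [::]; [:: 0%Z; 2%Z]; [::]; [::]; [:: 0%Z; 2%Z]; [::]; [::]; [::]; [::]; [::]];
  [:: [::]; [::]; [:: 0%Z; 2%Z]; [::]; [::]; [:: 0%Z; 2%Z]; [::]; [::]; [::]; [::]];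
  [:: [::]; [::]; [::]; [:: 0%Z; 2%Z]; [::]; [::]; [:: 0%Z; 2%Z]; [::]; [::]; [::]];
  [:: [::]; [:: 0%Z; 4%Z]; [::]; [::]; [::]; [::]; [::]; [::]; [::]; [::]];
  [:: [::]; [::]; [:: 0%Z; 4%Z]; [::]; [::]; [::]; [::]; [::]; [::]; [::]];
  [:: [::]; [::]; [::]; [:: 0%Z; 4%Z]; [::]; [::]; [::]; [::]; [::]; [::]];
  [:: [::]; [::]; [::]; [::]; [::]; [::]; [::]; [:: 0%Z; 4%Z]; [::]; [::]];
  [:: [::]; [::]; [::]; [::]; [::]; [::]; [::]; [::]; [:: 0%Z; 4%Z]; [::]];
  [:: [::]; [::]; [::]; [::]; [::]; [::]; [::]; [::]; [::]; [:: 0%Z; 4%Z]]].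
Definition GT2 : cmat :=
 [:: [:: [:: (-1)%Z]; [:: 1%Z]; [::]; [::]; [::]; [::]; [::]; [::]; [::]; [::]];
  [:: [:: 2%Z]; [::]; [::]; [::]; [::]; [::]; [::]; [::]; [::]; [::]];
  [:: [::]; [::]; [:: 1%Z]; [::]; [::]; [::]; [::]; [::]; [::]; [::]];
  [:: [::]; [::]; [::]; [:: 1%Z]; [::]; [::]; [::]; [::]; [::]; [::]];
  [:: [::]; [:: 0%Z; 4%Z]; [:: 0%Z; 2%Z]; [:: 0%Z; 2%Z]; [:: 0%Z; 4%Z]; [:: 0%Z; 2%Z]; [:: 0%Z; 2%Z]; [::]; [::]; [::]];
  [:: [::]; [::]; [::]; [::]; [::]; [::]; [::]; [:: 1%Z]; [::]; [::]];
  [:: [::]; [::]; [::]; [::]; [::]; [::]; [::]; [::]; [:: 1%Z]; [::]];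
  [:: [::]; [::]; [::]; [::]; [::]; [:: 2%Z]; [::]; [:: (-1)%Z]; [::]; [::]];
  [:: [::]; [::]; [::]; [::]; [::]; [::]; [:: 2%Z]; [::]; [:: (-1)%Z]; [::]];
  [:: [::]; [::]; [::]; [::]; [::]; [::]; [::]; [::]; [::]; [:: 1%Z]]].
Definition HT2 : cmat :=
 [:: [:: [::]; [:: 0%Z; 2%Z]; [::]; [::]; [::]; [::]; [::]; [::]; [::]; [::]];
  [:: [:: 0%Z; 4%Z]; [:: 0%Z; 2%Z]; [::]; [::]; [::]; [::]; [::]; [::]; [::]; [::]];
  [:: [::]; [::]; [:: 0%Z; 4%Z]; [::]; [::]; [::]; [::]; [::]; [::]; [::]];
  [:: [::]; [::]; [::]; [:: 0%Z; 4%Z]; [::]; [::]; [::]; [::]; [::]; [::]];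
  [:: [:: 0%Z; (-4)%Z]; [:: 0%Z; (-2)%Z]; [:: 0%Z; (-2)%Z]; [:: 0%Z; (-2)%Z]; [:: 1%Z]; [:: 0%Z; (-1)%Z]; [:: 0%Z; (-1)%Z]; [:: 0%Z; (-1)%Z]; [:: 0%Z; (-1)%Z]; [::]];
  [:: [::]; [::]; [::]; [::]; [::]; [:: 0%Z; 2%Z]; [::]; [:: 0%Z; 2%Z]; [::]; [::]];
  [:: [::]; [::]; [::]; [::]; [::]; [::]; [:: 0%Z; 2%Z]; [::]; [:: 0%Z; 2%Z]; [::]];
  [:: [::]; [::]; [::]; [::]; [::]; [:: 0%Z; 4%Z]; [::]; [::]; [::]; [::]];
  [:: [::]; [::]; [::]; [::]; [::]; [::]; [:: 0%Z; 4%Z]; [::]; [::]; [::]];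
  [:: [::]; [::]; [::]; [::]; [::]; [::]; [::]; [::]; [::]; [:: 0%Z; 4%Z]]].
Definition GT3 : cmat :=
 [:: [:: [:: 1%Z]; [::]; [::]; [::]; [::]; [::]; [::]; [::]; [::]; [::]];
  [:: [::]; [:: (-1)%Z]; [:: 1%Z]; [::]; [::]; [::]; [::]; [::]; [::]; [::]];
  [:: [::]; [:: 2%Z]; [::]; [::]; [::]; [::]; [::]; [::]; [::]; [::]];
  [:: [::]; [::]; [::]; [:: 1%Z]; [::]; [::]; [::]; [::]; [::]; [::]];
  [:: [::]; [::]; [::]; [::]; [:: (-1)%Z]; [:: 1%Z]; [::]; [::]; [::]; [::]];
  [:: [::]; [::]; [::]; [::]; [:: 2%Z]; [::]; [::]; [::]; [::]; [::]];
  [:: [::]; [::]; [::]; [::]; [::]; [::]; [:: 1%Z]; [::]; [::]; [::]];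
  [:: [::]; [::]; [:: 0%Z; 8%Z]; [:: 0%Z; 4%Z]; [::]; [:: 0%Z; 4%Z]; [:: 0%Z; 2%Z]; [:: 0%Z; 4%Z]; [:: 0%Z; 2%Z]; [::]];
  [:: [::]; [::]; [::]; [::]; [::]; [::]; [::]; [::]; [::]; [:: 1%Z]];
  [:: [::]; [::]; [::]; [::]; [::]; [::]; [::]; [::]; [:: 2%Z]; [:: (-1)%Z]]].
Definition HT3 : cmat :=
 [:: [:: [:: 0%Z; 4%Z]; [::]; [::]; [::]; [::]; [::]; [::]; [::]; [::]; [::]];
  [:: [::]; [::]; [:: 0%Z; 2%Z]; [::]; [::]; [::]; [::]; [::]; [::]; [::]];
  [:: [::]; [:: 0%Z; 4%Z]; [:: 0%Z; 2%Z]; [::]; [::]; [::]; [::]; [::]; [::]; [::]];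
  [:: [::]; [::]; [::]; [:: 0%Z; 4%Z]; [::]; [::]; [::]; [::]; [::]; [::]];
  [:: [::]; [::]; [::]; [::]; [::]; [:: 0%Z; 2%Z]; [::]; [::]; [::]; [::]];
  [:: [::]; [::]; [::]; [::]; [:: 0%Z; 4%Z]; [:: 0%Z; 2%Z]; [::]; [::]; [::]; [::]];
  [:: [::]; [::]; [::]; [::]; [::]; [::]; [:: 0%Z; 4%Z]; [::]; [::]; [::]];
  [:: [::]; [:: 0%Z; (-8)%Z]; [:: 0%Z; (-4)%Z]; [:: 0%Z; (-4)%Z]; [:: 0%Z; (-4)%Z]; [:: 0%Z; (-2)%Z]; [:: 0%Z; (-2)%Z]; [:: 1%Z]; [:: 0%Z; (-1)%Z]; [:: 0%Z; (-1)%Z]];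
  [:: [::]; [::]; [::]; [::]; [::]; [::]; [::]; [::]; [:: 0%Z; 2%Z]; [:: 0%Z; 2%Z]];
  [:: [::]; [::]; [::]; [::]; [::]; [::]; [::]; [::]; [:: 0%Z; 4%Z]; [::]]].
Definition GT4 : cmat :=
 [:: [:: [:: 1%Z]; [::]; [::]; [::]; [::]; [::]; [::]; [::]; [::]; [::]];
  [:: [::]; [:: 1%Z]; [::]; [::]; [::]; [::]; [::]; [::]; [::]; [::]];
  [:: [::]; [::]; [:: (-1)%Z]; [:: 1%Z]; [::]; [::]; [::]; [::]; [::]; [::]];
  [:: [::]; [::]; [:: 2%Z]; [::]; [::]; [::]; [::]; [::]; [::]; [::]];
  [:: [::]; [::]; [::]; [::]; [:: 1%Z]; [::]; [::]; [::]; [::]; [::]];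
  [:: [::]; [::]; [::]; [::]; [::]; [:: (-1)%Z]; [:: 1%Z]; [::]; [::]; [::]];
  [:: [::]; [::]; [::]; [::]; [::]; [:: 2%Z]; [::]; [::]; [::]; [::]];
  [:: [::]; [::]; [::]; [::]; [::]; [::]; [::]; [:: (-1)%Z]; [:: 1%Z]; [::]];
  [:: [::]; [::]; [::]; [::]; [::]; [::]; [::]; [:: 2%Z]; [::]; [::]];
  [:: [::]; [::]; [::]; [:: 0%Z; 16%Z]; [::]; [::]; [:: 0%Z; 8%Z]; [::]; [:: 0%Z; 4%Z]; [:: 0%Z; 4%Z]]].
Definition HT4 : cmat :=
 [:: [:: [:: 0%Z; 4%Z]; [::]; [::]; [::]; [::]; [::]; [::]; [::]; [::]; [::]];
  [:: [::]; [:: 0%Z; 4%Z]; [::]; [::]; [::]; [::]; [::]; [::]; [::]; [::]];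
  [:: [::]; [::]; [::]; [:: 0%Z; 2%Z]; [::]; [::]; [::]; [::]; [::]; [::]];
  [:: [::]; [::]; [:: 0%Z; 4%Z]; [:: 0%Z; 2%Z]; [::]; [::]; [::]; [::]; [::]; [::]];
  [:: [::]; [::]; [::]; [::]; [:: 0%Z; 4%Z]; [::]; [::]; [::]; [::]; [::]];
  [:: [::]; [::]; [::]; [::]; [::]; [::]; [:: 0%Z; 2%Z]; [::]; [::]; [::]];
  [:: [::]; [::]; [::]; [::]; [::]; [:: 0%Z; 4%Z]; [:: 0%Z; 2%Z]; [::]; [::]; [::]];
  [:: [::]; [::]; [::]; [::]; [::]; [::]; [::]; [::]; [:: 0%Z; 2%Z]; [::]];
  [:: [::]; [::]; [::]; [::]; [::]; [::]; [::]; [:: 0%Z; 4%Z]; [:: 0%Z; 2%Z]; [::]];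
  [:: [::]; [::]; [:: 0%Z; (-16)%Z]; [:: 0%Z; (-8)%Z]; [::]; [:: 0%Z; (-8)%Z]; [:: 0%Z; (-4)%Z]; [:: 0%Z; (-4)%Z]; [:: 0%Z; (-2)%Z]; [:: 1%Z]]].
Definition LmTN (p : nat * bool) : cmat :=
  match p with
  | (0, true) => GT1 | (1, true) => GT2 | (2, true) => GT3 | (3, true) => GT4
  | (0, false) => HT1 | (1, false) => HT2 | (2, false) => HT3 | (3, false) => HT4
  | _ => cid end.
Definition LmT (l : letter) : cmat := LmTN (nat_of_ord l.1, l.2).

Lemma hcM : forall (i : 'I_4) b, ceqb (cmm (LmM (i, b)) (LmM (i, ~~ b))) (cdiag [:: 0%Z; 1%Z]).
Proof. by move=> [[|[|[|[|//]]]] Hi] []; vm_compute. Qed.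
Lemma hfM : forall i j : 'I_4, (i.+2 <= j)%nat ->
  ceqb (cmm (LmM (i, true)) (LmM (j, true))) (cmm (LmM (j, true)) (LmM (i, true))).
Proof. by move=> [[|[|[|[|//]]]] Hi] [[|[|[|[|//]]]] Hj] //= _; vm_compute. Qed.
Lemma hnM : forall i j : 'I_4, (j = i.+1 :> nat) ->
  ceqb (cmm (cmm (LmM (i, true)) (LmM (j, true))) (LmM (i, true)))
       (cmm (cmm (LmM (j, true)) (LmM (i, true))) (LmM (j, true))).
Proof. by move=> [[|[|[|[|//]]]] Hi] [[|[|[|[|//]]]] Hj] //= _; vm_compute. Qed.
Lemma hcT : forall (i : 'I_4) b, ceqb (cmm (LmT (i, b)) (LmT (i, ~~ b))) (cdiag [:: 0%Z; 4%Z]).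
Proof. by move=> [[|[|[|[|//]]]] Hi] []; vm_compute. Qed.
Lemma hfT : forall i j : 'I_4, (i.+2 <= j)%nat ->
  ceqb (cmm (LmT (i, true)) (LmT (j, true))) (cmm (LmT (j, true)) (LmT (i, true))).
Proof. by move=> [[|[|[|[|//]]]] Hi] [[|[|[|[|//]]]] Hj] //= _; vm_compute. Qed.
Lemma hnT : forall i j : 'I_4, (j = i.+1 :> nat) ->
  ceqb (cmm (cmm (LmT (i, true)) (LmT (j, true))) (LmT (i, true)))
       (cmm (cmm (LmT (j, true)) (LmT (i, true))) (LmT (j, true))).
Proof. by move=> [[|[|[|[|//]]]] Hi] [[|[|[|[|//]]]] Hj] //= _; vm_compute. Qed.


Definition cmatz := seq (seq Z).
Definition entz (M : cmatz) (i j : nat) : Z := nth Z0 (nth [::] M i) j.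
Definition cmkz (f : nat -> nat -> Z) : cmatz := mkseq (fun i => mkseq (fun j => f i j) 10) 10.
Lemma entz_mk f i j : (i < 10)%nat -> (j < 10)%nat -> entz (cmkz f) i j = f i j.
Proof. by move=> hi hj; rewrite /entz nth_mkseq // nth_mkseq. Qed.

Definition c0 (M : cmat) : cmatz := cmkz (fun i j => nth Z0 (ent M i j) 0).

Section Const.
Variable R : comNzRingType.
Variable f : {rmorphism Z -> R}.
Variable red : Z -> Z.
Hypothesis hred : forall z, f (red z) = f z.

Definition imf (M : cmatz) : 'M[R]_10 := \matrix_(i, j) f (entz M i j).
Definition cmmf (A B : cmatz) : cmatz :=
  cmkz (fun i j => red (foldr Z.add Z0 (mkseq (fun k => Z.mul (entz A i k) (entz B k j)) 10))).

Lemma f_sum_mkseq (g : nat -> Z) n : f (foldr Z.add Z0 (mkseq g n)) = \sum_(k < n) f (g k).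
Proof.
rewrite /mkseq -(big_mkord xpredT (fun k => f (g k))) /index_iota subn0.
elim: (iota 0 n) => [|x l IH] /=; first by rewrite big_nil rmorph0.
have ->: Z.add (g x) (foldr Z.add Z0 (map g l)) = (g x + foldr Z.add Z0 (map g l))%R by [].
by rewrite rmorphD IH big_cons.
Qed.

Lemma imf_mul A B : imf (cmmf A B) = imf A *m imf B.
Proof.
apply/matrixP => i j; rewrite !mxE entz_mk // hred f_sum_mkseq.
apply: eq_bigr => k _; rewrite !mxE.
have ->: Z.mul (entz A i k) (entz B k j) = (entz A i k * entz B k j)%R by [].
by rewrite rmorphM.
Qed.

Definition ceqf (A B : cmatz) : bool :=
  all (fun i => all (fun j => Z.eqb (red (entz A i j)) (red (entz B i j))) (iota 0 10)) (iota 0 10).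

Lemma ceqfP A B : ceqf A B -> imf A = imf B.
Proof.
move=> /allP H; apply/matrixP => i j; rewrite !mxE.
have hi : nat_of_ord i \in iota 0 10 by rewrite mem_iota leq0n add0n ltn_ord.
have hj : nat_of_ord j \in iota 0 10 by rewrite mem_iota leq0n add0n ltn_ord.
have /allP H2 := H i hi.
by move/Z.eqb_spec: (H2 j hj) => E; rewrite -hred E hred.
Qed.

Definition ctrf (M : cmatz) : Z := foldr Z.add Z0 (mkseq (fun i => entz M i i) 10).
Lemma tr_imf M : \tr (imf M) = f (ctrf M).
Proof.
rewrite /ctrf f_sum_mkseq /mxtrace; apply: eq_bigr => i _; by rewrite mxE.
Qed.

Lemma map_im_c0 M : map_mx (f \o horner_eval 0) (im M) = imf (c0 M).
Proof.
apply/matrixP => i j; rewrite !mxE /= /c0 entz_mk //.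
by rewrite horner_evalE horner_coef0 coef_ip.
Qed.

Fixpoint cpowf (A : cmatz) (n : nat) : cmatz :=
  match n with 0 => cmkz (fun i j => if i == j then 1%Z else Z0) | n'.+1 => cmmf (cpowf A n') A end.
Lemma imf_pow A n : imf (cpowf A n) = imf A ^+ n.
Proof.
elim: n => [|n IH] /=.
  apply/matrixP => i j; rewrite !mxE entz_mk //.
  case: (i =P j) => [->|/eqP h]; first by rewrite !eqxx rmorph1.
  have h' : (nat_of_ord i == nat_of_ord j) = false by apply/negbTE.
  by rewrite h' rmorph0.
by rewrite imf_mul IH exprSr.
Qed.

End Const.

Lemma map_mxXn (R S : pzRingType) (g : {rmorphism R -> S}) n (A : 'M[R]_n.+1) k :
  map_mx g (A ^+ k) = map_mx g A ^+ k.
Proof.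
elim: k => [|k IH]; first by rewrite !expr0 map_mx1.
by rewrite !exprS map_mxM IH.
Qed.

Lemma pow_stab (R : pzRingType) (X : R) m : X ^+ m.+1 = X ^+ m -> forall n, (m <= n)%nat -> X ^+ n = X ^+ m.
Proof.
move=> h n; elim: n => [|n IH]; first by rewrite leqn0 => /eqP ->.
rewrite leq_eqVlt => /orP[/eqP <-|] //; rewrite ltnS => /IH hn.
by rewrite exprS hn -exprS h.
Qed.


Definition cdropn (n : nat) (M : cmat) : cmat := cmk (fun i j => drop n (ent M i j)).

Lemma shift_ok n M : ceqb M (cshift n (cdropn n M)) -> im M = 'X^n *: im (cdropn n M).
Proof. by move/ceqbP => ->; rewrite im_shift. Qed.

Definition sM : cpoly := [:: 0%Z; 1%Z].
Lemma ip_sM : ip sM = 'X.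
Proof. by rewrite /ip /= mulr0 addr0 polyC1 mulr1 polyC0 add0r. Qed.
Lemma hsM : ip sM != 0. Proof. by rewrite ip_sM polyX_eq0. Qed.

Notation PhiM := (Phi LmM).
Notation cprodM := (cprod LmM).

Lemma PhiM_beq w1 w2 : beq w1 w2 -> 'X ^+ negc w2 *: PhiM w1 = 'X ^+ negc w1 *: PhiM w2.
Proof. by rewrite -ip_sM; exact: (Phi_beq hcM hfM hnM hsM). Qed.

Lemma negc_pos w : all (fun l : letter => l.2) w -> negc w = 0%nat.
Proof. by rewrite /negc; elim: w => [|[i b] w IH] //=; case: b => //= /IH ->. Qed.

Lemma negc_winv w : negc (winv w) = count (fun l : letter => l.2) w.
Proof. by rewrite /negc /winv count_rev count_map; apply: eq_count => -[i b] /=; rewrite negbK. Qed.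

Lemma negc_size w : (negc (winv w) + negc w)%nat = size w.
Proof.
by rewrite negc_winv /negc -(count_predC (fun l : letter => l.2) w).
Qed.

Lemma PhiM_N w ps : vals w = ps -> PhiM w = im (cprodN LmMN ps).
Proof. by move=> <-; rewrite Phi_cprod; congr im; exact: cprod_vals. Qed.

Definition deltaN : seq (nat * bool) :=
  [:: (0, true); (1, true); (2, true); (3, true); (0, true); (1, true); (2, true);
      (0, true); (1, true); (0, true)]%nat.
Lemma vals_Delta : vals Delta = deltaN.
Proof. by rewrite /Delta !vals_cat !vals_sigma. Qed.

Definition DM : cmat := cdropn 1 (cprodN LmMN deltaN).
Lemma PhiM_Delta : PhiM Delta = 'X *: im DM.
Proof.
rewrite (PhiM_N vals_Delta) (shift_ok (n:=1)); [by rewrite expr1 | vm_compute; reflexivity].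
Qed.

Lemma PhiM_DD : PhiM Delta *m PhiM Delta = 'X ^+ 2 *: 1%:M.
Proof.
rewrite -Phi_cat (@PhiM_N _ (deltaN ++ deltaN)); last by rewrite vals_cat vals_Delta.
have -> : im (cprodN LmMN (deltaN ++ deltaN)) = im (cdiag [:: 0%Z; 0%Z; 1%Z]).
  apply: ceqbP; vm_compute; reflexivity.
rewrite im_cdiag; congr (_ *: _).
by rewrite /ip /= !polyC0 !add0r polyC1 mulr0 addr0 mulr1 expr2.
Qed.

Lemma scale_injM (c : {poly Z}) (A B : 'M[{poly Z}]_10) : c != 0 -> c *: A = c *: B -> A = B.
Proof.
move=> hc0 E; apply/matrixP => i j.
have := congr1 (fun M : 'M[{poly Z}]_10 => M i j) E; rewrite /= !mxE.
by move/(mulfI hc0).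
Qed.

Lemma Xn_neq0 n : ('X ^+ n : {poly Z}) != 0.
Proof. by rewrite expf_neq0 // polyX_eq0. Qed.

Lemma simple_divM x : simple x -> exists B, PhiM (winv x) = 'X ^+ (negc (winv x)).-1 *: B.
Proof.
case=> _ [v [hv hb]].
have E := PhiM_beq hb; rewrite negc_pos // negc_cat (negc_pos (w := Delta)) // addn0 in E.
rewrite expr0 scale1r Phi_cat in E.
have E2 : 'X ^+ 2 *: PhiM (winv x) = 'X ^+ (negc (winv x)).+1 *: (PhiM v *m im DM).
  have -> : 'X ^+ 2 *: PhiM (winv x) = PhiM (winv x) *m ('X ^+ 2 *: 1%:M).
    by rewrite -scalemxAr mulmx1.
  by rewrite -PhiM_DD mulmxA E PhiM_Delta -scalemxAl -scalemxAr scalerA -exprSr.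
move: E2; clear E; case: (negc (winv x)) => [|n] E2 /=; first by exists (PhiM (winv x)); rewrite expr0 scale1r.
exists (PhiM v *m im DM); apply: (@scale_injM ('X ^+ 2)); first exact: Xn_neq0.
by rewrite E2 scalerA -exprD addnC addn2.
Qed.


Definition neg_list (l : seq (nat * bool)) := rev (map (fun p : nat * bool => (p.1, ~~ p.2)) l).
Definition EN (l : seq (nat * bool)) (n : nat) : cmat := cdropn n (cprodN LmMN (neg_list l)).

Lemma PhiM_winv_word w l n : vals w = l ->
  ceqb (cprodN LmMN (neg_list l)) (cshift n (EN l n)) -> PhiM (winv w) = 'X ^+ n *: im (EN l n).
Proof.
move=> hl hc; rewrite (@PhiM_N _ (neg_list l)); last by rewrite vals_winv hl.
by rewrite (ceqbP hc) im_shift.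
Qed.

Definition waN : seq (nat * bool) := [:: (0, true); (1, true); (0, true); (3, true)]%nat.
Definition wbN : seq (nat * bool) := [:: (1, true); (0, true); (2, true); (3, true); (2, true)]%nat.
Definition wcN : seq (nat * bool) := [:: (2, true); (3, true)]%nat.
Definition w4N : seq (nat * bool) := [:: (3, true)]%nat.

Lemma vals_wa : vals wa = waN. Proof. by rewrite /wa !vals_cat !vals_sigma. Qed.
Lemma vals_wb : vals wb = wbN. Proof. by rewrite /wb !vals_cat !vals_sigma. Qed.
Lemma vals_wc : vals wc = wcN. Proof. by rewrite /wc !vals_cat !vals_sigma. Qed.
Lemma vals_w4 : vals w4 = w4N. Proof. by rewrite /w4 !vals_sigma. Qed.

Lemma Phi_iwa : PhiM (winv wa) = 'X ^+ 3 *: im (EN waN 3).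
Proof. apply: PhiM_winv_word vals_wa _; vm_compute; reflexivity. Qed.
Lemma Phi_iwb : PhiM (winv wb) = 'X ^+ 4 *: im (EN wbN 4).
Proof. apply: PhiM_winv_word vals_wb _; vm_compute; reflexivity. Qed.
Lemma Phi_iwc : PhiM (winv wc) = 'X ^+ 1 *: im (EN wcN 1).
Proof. apply: PhiM_winv_word vals_wc _; vm_compute; reflexivity. Qed.
Lemma Phi_iw4 : PhiM (winv w4) = 'X ^+ 0 *: im (EN w4N 0).
Proof. apply: PhiM_winv_word vals_w4 _; vm_compute; reflexivity. Qed.

Definition Mk (m : nat) : 'M[{poly Z}]_10 :=
  im (EN w4N 0) ^+ (2 * m + 1) *m (im (EN wcN 1) *m (im (EN wbN 4) *m im (EN waN 3) ^+ (2 * m + 4))).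

Lemma count_wpow (P : pred letter) w n : count P (wpow w n) = (count P w * n)%nat.
Proof. by elim: n => [|n IH]; rewrite ?muln0 // wpowS count_cat IH mulnS. Qed.

Lemma Phi_inf m : PhiM (winv (flatten (nfxs m))) = 'X ^+ (6 * m + 17) *: Mk m.
Proof.
rewrite nf_split (winv_cat (wpow wa _)) (winv_cat wb) (winv_cat wc) !winv_wpow.
rewrite !Phi_cat !Phi_wpow Phi_iwa Phi_iwb Phi_iwc Phi_iw4.
rewrite expr0 scale1r !exprZn /Mk.
do 4 rewrite -?scalemxAl -?scalemxAr.
rewrite !scalerA !mulmxA -!exprM -!exprD.
congr (_ *: _); congr (_ ^+ _); lia.
Qed.

Lemma count_sigma i : count (fun l : letter => l.2) (sigma i) = 1%nat. Proof. by []. Qed.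

Lemma negc_winv_beta m : negc (winv (beta m.+2)) = (10 * m + 24)%nat.
Proof.
rewrite negc_winv /beta count_cat (count_wpow _ delta3) count_cat (count_wpow _ (sigma 4)).
rewrite count_cat (count_wpow _ (sigma 4)) !count_sigma.
rewrite (_ : count _ delta3 = 2%nat) //; lia.
Qed.

Lemma negc_winv_nf m : negc (winv (flatten (nfxs m))) = (10 * m + 24)%nat.
Proof.
rewrite negc_winv nf_split count_cat (count_wpow _ wa) count_cat count_cat (count_wpow _ w4).
rewrite (_ : count _ wa = 4%nat) // (_ : count _ wb = 5%nat) // (_ : count _ wc = 2%nat) //.
rewrite (_ : count _ w4 = 1%nat) //; lia.
Qed.

Lemma Phi_ibeta m : PhiM (winv (beta m.+2)) = 'X ^+ (6 * m + 17) *: Mk m.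
Proof.
have E := PhiM_beq (beq_winv (beta_nf m)).
rewrite negc_winv_beta negc_winv_nf Phi_inf in E.
by apply: (scale_injM (Xn_neq0 (10 * m + 24))).
Qed.

Definition idZ (z : Z) : Z := z.
Lemma hidZ : forall z : Z, idfun (idZ z) = idfun z. Proof. by []. Qed.

Definition A4 := c0 (EN w4N 0).
Definition Ac := c0 (EN wcN 1).
Definition Ab := c0 (EN wbN 4).
Definition Aa := c0 (EN waN 3).

Lemma tr_Mk0 m : (\tr (Mk m))`_0 = 2%Z.
Proof.
have -> : (\tr (Mk m))`_0 = (idfun \o horner_eval 0) (\tr (Mk m)).
  by rewrite /= horner_evalE horner_coef0.
rewrite -trace_map_mx /Mk !map_mxM !map_mxXn !(map_im_c0 idfun).
rewrite -/A4 -/Ac -/Ab -/Aa.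
have h4 : imf idfun A4 ^+ (2 * m + 1) = imf idfun A4 ^+ 1.
  apply: pow_stab; last by rewrite addn1.
  rewrite -!(imf_pow hidZ); apply: (ceqfP hidZ); vm_compute; reflexivity.
have ha : imf idfun Aa ^+ (2 * m + 4) = imf idfun Aa ^+ 2.
  rewrite (_ : (2 * m + 4 = 2 * (m + 2))%nat); last by lia.
  rewrite exprM -[RHS]expr1; apply: pow_stab; last by rewrite addn2.
  rewrite expr1 -!exprM -!(imf_pow hidZ); apply: (ceqfP hidZ); vm_compute; reflexivity.
rewrite h4 ha expr1 -!(imf_pow hidZ) -!(imf_mul hidZ) tr_imf.
by vm_compute.
Qed.


Lemma tr_conj w c : \tr (PhiM (winv c ++ w ++ c)) = 'X ^+ size c * \tr (PhiM w).
Proof.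
rewrite !Phi_cat mxtrace_mulC -mulmxA -Phi_cat.
have E := PhiM_beq (beq_inv_r c).
rewrite negc_cat addnC negc_size expr0 scale1r in E.
by rewrite E -scalemxAr mulmx1 mxtraceZ.
Qed.

Lemma div_flat xs : (forall s, s \in xs -> simple s) ->
  exists e B, PhiM (winv (flatten xs)) = 'X ^+ e *: B /\ (negc (winv (flatten xs)) <= e + size xs)%nat.
Proof.
elim: xs => [|s xs IH] hs.
  by exists 0%nat, 1%:M; rewrite /= expr0 scale1r.
have hs' : forall t, t \in xs -> simple t by move=> t ht; apply: hs; rewrite in_cons ht orbT.
have [e [B [hB he]]] := IH hs'.
have [Bs hBs] := simple_divM (hs s (mem_head s xs)).
exists (e + (negc (winv s)).-1)%nat, (B *m Bs); split.
  by rewrite /= winv_cat Phi_cat hB hBs -scalemxAl -scalemxAr scalerA -exprD.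
rewrite /= winv_cat negc_cat; move: he; rewrite /=; lia.
Qed.

Lemma negc_idpow p : (p <= 0)%R -> negc (winv (Delta_pow p)) = 0%nat.
Proof.
case: p => [n|n] hp; rewrite /Delta_pow.
  by move: hp; rewrite lez_nat leqn0 => /eqP ->.
by rewrite winv_wpow /negc count_wpow (_ : count _ (winv (winv Delta)) = 0%nat).
Qed.

Lemma claimB m c z p xs : beq z (winv c ++ beta m.+2 ++ c) -> left_normal_form z p xs ->
  (p <= 0)%R -> (4 * m.+2 - 1 <= size xs)%nat.
Proof.
move=> hz [hN hs _] hp.
rewrite leqNgt; apply/negP => hlt.
have hNZ := beq_trans (beq_sym hN) hz.
have hW := beq_winv hNZ.
rewrite (winv_cat (Delta_pow p)) (winv_cat (winv c)) (winv_cat (beta m.+2)) winvK -catA in hW.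
have E := congr1 mxtrace (PhiM_beq hW).
rewrite !mxtraceZ tr_conj Phi_ibeta mxtraceZ in E.
have hs1 : forall s, s \in xs -> simple s by move=> s /hs [].
have [e [B [hB he]]] := div_flat hs1.
rewrite Phi_cat hB -scalemxAl mxtraceZ in E.
rewrite !negc_cat negc_idpow // addn0 negc_winv_beta in E.
rewrite (_ : negc (winv c) = (size c - negc c)%nat) in E; last first.
  by rewrite -(negc_size c) addnK.
move: (negc (winv (flatten xs))) he E => b he E.
have hcs : (negc c <= size c)%nat by rewrite -(negc_size c) leq_addl.
set T1 := \tr (_ *m _) in E.
move: (erefl (b + size c + 6 * m + 17)%nat); move: {-1}(b + size c + 6 * m + 17)%nat => K hK.
have hd : (K < size c - negc c + (10 * m + 24 + negc c) + e)%nat by clear -he hlt hcs hK; move: he hlt hcs hK; move: (size c) (negc c) (size xs) => s1 s2 s3; lia.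
move: E; rewrite !mulrA -!exprD.
rewrite (_ : (size c - negc c + (10 * m + 24 + negc c) + e)%nat =
   (K + (size c - negc c + (10 * m + 24 + negc c) + e - K))%nat); last by lia.
rewrite (_ : (b + size c + (6 * m + 17))%nat = K); last by lia.
rewrite exprD -mulrA => /(mulfI (Xn_neq0 K)) E.
have := tr_Mk0 m; rewrite -E coefXnM.
by rewrite (_ : (0 < _)%nat); last by lia.
Qed.


Definition sT : cpoly := [:: 0%Z; 4%Z].
Lemma hsT : ip sT != 0.
Proof.
apply/eqP => h; have := congr1 (fun p : {poly Z} => p`_1) h.
by rewrite coef_ip coef0.
Qed.

Notation PhiT := (Phi LmT).

Lemma PhiT_beq w1 w2 : beq w1 w2 -> ip sT ^+ negc w2 *: PhiT w1 = ip sT ^+ negc w1 *: PhiT w2.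
Proof. exact: (Phi_beq hcT hfT hnT hsT). Qed.

Lemma PhiT_N w ps : vals w = ps -> PhiT w = im (cprodN LmTN ps).
Proof. by move=> <-; rewrite Phi_cprod; congr im; exact: cprod_vals. Qed.

Notation zz := (@intmul 'Z_8 1 \o int_of_Z).
Definition red8 (z : Z) : Z := Z.modulo z 8.
Lemma zz8 : zz 8%Z = 0. Proof. by apply/eqP; vm_compute. Qed.
Lemma hred8 z : zz (red8 z) = zz z.
Proof.
rewrite {2}(Z.div_mod z 8) //.
have -> : (8 * (z / 8) + z mod 8)%Z = (8%Z * (z / 8)%Z + red8 z)%R by [].
rewrite rmorphD rmorphM /=.
have -> : ((int_of_Z 8%Z)%:~R : 'Z_8) = 0 by apply/eqP; vm_compute.
by rewrite mul0r add0r.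
Qed.

Lemma tr_conjT w c : \tr (PhiT (winv c ++ w ++ c)) = ip sT ^+ size c * \tr (PhiT w).
Proof.
rewrite !Phi_cat mxtrace_mulC -mulmxA -Phi_cat.
have E := PhiT_beq (beq_inv_r c).
rewrite negc_cat addnC negc_size expr0 scale1r in E.
by rewrite E -scalemxAr mulmx1 mxtraceZ.
Qed.

Lemma all_wpow (P : pred letter) w n : all P w -> all P (wpow w n).
Proof. by move=> h; elim: n => [|n IH] //; rewrite wpowS all_cat h IH. Qed.

Lemma pos_flat xs : (forall s, s \in xs -> positive s) ->
  exists U, all (fun l : letter => l.2) U /\ beq (flatten xs) U.
Proof.
elim: xs => [|s xs IH] hs; first by exists [::]; split=> //; exact: beq_refl.
have hs' : forall t, t \in xs -> positive t by move=> t ht; apply: hs; rewrite in_cons ht orbT.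
have [U [hU hb]] := IH hs'.
have [u [hu hbu]] := hs s (mem_head s xs).
by exists (u ++ U); split; [rewrite all_cat hu hU | exact: beq_cat].
Qed.

Notation pi8 := (zz \o horner_eval (0 : Z)).

Definition dd3N : seq (nat * bool) := [:: (1, true); (0, true)]%nat.
Definition Td := c0 (cprodN LmTN dd3N).
Definition Ts := c0 (cprodN LmTN [:: (3, true)]%nat).
Definition Tt := c0 (cprodN LmTN [:: (2, true)]%nat).

Lemma PhiT_Delta0 : map_mx pi8 (PhiT Delta) = 0.
Proof.
rewrite (PhiT_N vals_Delta) (map_im_c0 zz).
have -> : imf zz (c0 (cprodN LmTN deltaN)) = imf zz (cmkz (fun _ _ => Z0)).
  apply: (ceqfP hred8); vm_compute; reflexivity.
by apply/matrixP => i j; rewrite !mxE entz_mk // rmorph0.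
Qed.

Lemma stabT (A : cmatz) n : ceqf red8 (cpowf red8 A 4) (cpowf red8 A 3) -> (3 <= n)%nat ->
  imf zz A ^+ n = imf zz A ^+ 3.
Proof.
move=> h hn; apply: pow_stab hn.
by rewrite -!(imf_pow hred8); apply: (ceqfP hred8).
Qed.

Lemma trT m : pi8 (\tr (PhiT (beta m.+2))) != 0.
Proof.
rewrite -trace_map_mx /beta (Phi_cat _ (wpow delta3 _)) (Phi_cat _ (wpow (sigma 4) _)).
rewrite (Phi_cat _ (sigma 3)) !Phi_wpow.
rewrite (PhiT_N (w := delta3) (ps := dd3N)); last by rewrite /delta3 vals_cat !vals_sigma.
rewrite (PhiT_N (w := sigma 4) (ps := [:: (3, true)]%nat)); last by rewrite vals_sigma.
rewrite (PhiT_N (w := sigma 3) (ps := [:: (2, true)]%nat)); last by rewrite vals_sigma.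
rewrite map_mxM map_mxXn map_mxM map_mxXn map_mxM map_mxXn !(map_im_c0 zz) -/Td -/Ts -/Tt.
rewrite (@stabT Td (3 * m.+2 + 1)); [|vm_compute; reflexivity|lia].
rewrite (@stabT Ts (2 * m.+2 + 2)); [|vm_compute; reflexivity|lia].
rewrite (@stabT Ts (2 * m.+2 - 1)); [|vm_compute; reflexivity|lia].
rewrite -!(imf_pow hred8) -!(imf_mul hred8) tr_imf.
by vm_compute.
Qed.

Lemma claimA m c z p xs : beq z (winv c ++ beta m.+2 ++ c) -> left_normal_form z p xs ->
  (p <= 0)%R.
Proof.
move=> hz [hN hs _].
case: p hN => [[|n]|n] hN //.
exfalso.
have hpos : forall s, s \in xs -> positive s by move=> s /hs [[]].
have [U [hU hbU]] := pos_flat hpos.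
set Y := Delta ++ wpow Delta n ++ U.
have hY : beq Y (winv c ++ beta m.+2 ++ c).
  apply: beq_trans hz; apply: beq_sym; apply: (beq_trans hN).
  rewrite /Delta_pow wpowS -catA; apply: beq_catl; apply: beq_catl; exact: hbU.
have hYp : all (fun l : letter => l.2) Y.
  by rewrite /Y !all_cat hU all_wpow.
have E := congr1 mxtrace (PhiT_beq hY).
rewrite !mxtraceZ tr_conjT (negc_pos hYp) expr0 mul1r (negc_cat (winv c)) (negc_cat (beta m.+2)) in E.
rewrite (negc_pos (w := beta m.+2)) ?addn0 in E; last first.
  by rewrite /beta !all_cat !all_wpow.
rewrite add0n negc_size in E.
have E2 : \tr (PhiT Y) = \tr (PhiT (beta m.+2)).
  by apply: (mulfI (expf_neq0 (size c) hsT)).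
have := trT m; rewrite -E2 /Y Phi_cat -trace_map_mx map_mxM PhiT_Delta0 mul0mx.
by rewrite linear0 eqxx.
Qed.


Lemma simple_of x v : all (fun l : letter => l.2) x -> all (fun l : letter => l.2) v ->
  beq (x ++ v) Delta -> simple x.
Proof.
move=> hx hv h; split; first by exists x; split=> //; exact: beq_refl.
by exists v; split=> //; exact: compl_of.
Qed.

Lemma not_beq_M s t ls lt : all (fun l : letter => l.2) s -> all (fun l : letter => l.2) t ->
  vals s = ls -> vals t = lt -> cdiffb (cprodN LmMN ls) (cprodN LmMN lt) 12 -> ~ beq s t.
Proof.
move=> hs ht hls hlt hd hb.
have E := PhiM_beq hb; rewrite !negc_pos // expr0 !scale1r in E.
by move: E; rewrite (PhiM_N hls) (PhiM_N hlt); apply: cdiffbP hd.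
Qed.

Lemma lw_check s1 s2 l1 l2 : all (fun l : letter => l.2) s1 -> all (fun l : letter => l.2) s2 ->
  vals s1 = l1 -> vals s2 = l2 ->
  all (fun i => lowb (cprodN LmMN (neg_list (l1 ++ [:: (i, true)]))) (size l1) ||
                lowb (cprodN LmMN ((i, false) :: l2)) 1) (iota 0 4) ->
  left_weighted s1 s2.
Proof.
move=> h1 h2 hl1 hl2 /allP hall [i [hy1 hy2]].
have hi : nat_of_ord i \in iota 0 4 by rewrite mem_iota leq0n add0n ltn_ord.
case/orP: (hall _ hi) => hlow.
- have [B hB] := simple_divM hy1.
  have hv : vals (winv (s1 ++ [:: (i, true)])) = neg_list (l1 ++ [:: (nat_of_ord i, true)]).
    by rewrite vals_winv vals_cat hl1.
  rewrite (PhiM_N hv) in hB.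
  have hn : (negc (winv (s1 ++ [:: (i, true)]))).-1 = size l1.
    rewrite negc_winv count_cat /= addn1 /= -hl1 /vals size_map.
    by elim: (s1) h1 => [|[j b] w IH] //= /andP[-> /IH ->].
  by rewrite hn in hB; apply: (lowbP hlow hB).
- case: hy2 => [[u [hu hb]] _].
  have E := PhiM_beq hb.
  rewrite (negc_pos hu) expr0 scale1r negc_cat (negc_pos h2) addn0 in E.
  rewrite (_ : negc [:: (i, false)] = 1%nat) // expr1 in E.
  have hv : vals ([:: (i, false)] ++ s2) = (nat_of_ord i, false) :: l2 by rewrite vals_cat hl2.
  by rewrite (PhiM_N hv) in E; apply: (lowbP hlow E).
Qed.


Lemma simple_wa : simple wa. Proof. apply: (@simple_of wa v_a); [by [] | by [] | exact: ch_compl_a]. Qed.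
Lemma simple_wb : simple wb. Proof. apply: (@simple_of wb v_b); [by [] | by [] | exact: ch_compl_b]. Qed.
Lemma simple_wc : simple wc. Proof. apply: (@simple_of wc v_c); [by [] | by [] | exact: ch_compl_c]. Qed.
Lemma simple_w4 : simple w4. Proof. apply: (@simple_of w4 v_s4); [by [] | by [] | exact: ch_compl_s4]. Qed.

Lemma vals_nil : vals [::] = [::]. Proof. by []. Qed.

Lemma good_factor s : s \in [:: wa; wb; wc; w4] -> [/\ simple s, ~ beq s [::] & ~ beq s Delta].
Proof.
rewrite !inE => /or4P[] /eqP ->; split.
- exact: simple_wa.
- apply: (not_beq_M _ _ vals_wa vals_nil); [by [] | by [] | vm_compute; reflexivity].
- apply: (not_beq_M _ _ vals_wa vals_Delta); [by [] | by [] | vm_compute; reflexivity].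
- exact: simple_wb.
- apply: (not_beq_M _ _ vals_wb vals_nil); [by [] | by [] | vm_compute; reflexivity].
- apply: (not_beq_M _ _ vals_wb vals_Delta); [by [] | by [] | vm_compute; reflexivity].
- exact: simple_wc.
- apply: (not_beq_M _ _ vals_wc vals_nil); [by [] | by [] | vm_compute; reflexivity].
- apply: (not_beq_M _ _ vals_wc vals_Delta); [by [] | by [] | vm_compute; reflexivity].
- exact: simple_w4.
- apply: (not_beq_M _ _ vals_w4 vals_nil); [by [] | by [] | vm_compute; reflexivity].
- apply: (not_beq_M _ _ vals_w4 vals_Delta); [by [] | by [] | vm_compute; reflexivity].
Qed.

Lemma lw_aa : left_weighted wa wa.
Proof. apply: (lw_check _ _ vals_wa vals_wa); [by [] | by [] | vm_compute; reflexivity]. Qed.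
Lemma lw_ab : left_weighted wa wb.
Proof. apply: (lw_check _ _ vals_wa vals_wb); [by [] | by [] | vm_compute; reflexivity]. Qed.
Lemma lw_bc : left_weighted wb wc.
Proof. apply: (lw_check _ _ vals_wb vals_wc); [by [] | by [] | vm_compute; reflexivity]. Qed.
Lemma lw_c4 : left_weighted wc w4.
Proof. apply: (lw_check _ _ vals_wc vals_w4); [by [] | by [] | vm_compute; reflexivity]. Qed.
Lemma lw_44 : left_weighted w4 w4.
Proof. apply: (lw_check _ _ vals_w4 vals_w4); [by [] | by [] | vm_compute; reflexivity]. Qed.

Lemma size_nf m : size (nfxs m) = (4 * m + 7)%nat.
Proof. by rewrite /nfxs !size_cat !size_nseq /=; lia. Qed.

Lemma nth_nf m i : (i < 4 * m + 7)%nat ->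
  nth [::] (nfxs m) i = if (i < 2 * m + 4)%nat then wa else if i == (2 * m + 4)%nat then wb
                         else if i == (2 * m + 5)%nat then wc else w4.
Proof.
move=> hi; rewrite /nfxs nth_cat size_nseq.
case: ltnP => h1; first by rewrite nth_nseq h1.
rewrite nth_cat /=.
case: ltnP => h2.
  case E: (i - (2 * m + 4))%nat h2 => [|[|//]] _ /=.
    by rewrite (_ : i = (2 * m + 4)%nat) ?eqxx //; lia.
  rewrite (_ : i == (2 * m + 4)%nat = false); last by apply/negbTE/eqP; lia.
  by rewrite (_ : i = (2 * m + 5)%nat) ?eqxx //; lia.
rewrite nth_nseq (_ : (i - (2 * m + 4) - 2 < 2 * m + 1)%nat); last by lia.
rewrite (_ : i == (2 * m + 4)%nat = false); last by apply/negbTE/eqP; lia.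
by rewrite (_ : i == (2 * m + 5)%nat = false) //; apply/negbTE/eqP; lia.
Qed.

Lemma lnf_beta m : left_normal_form (beta m.+2) 0 (nfxs m).
Proof.
split.
- exact: beta_nf.
- move=> s hs; apply: good_factor.
  move: hs; rewrite /nfxs !mem_cat !inE => /or3P[/nseqP[-> _]|/orP[]/eqP->|/nseqP[-> _]];
    by rewrite ?eqxx ?orbT.
- move=> i; rewrite size_nf => hi.
  rewrite !nth_nf; [|lia|lia].
  case: (ltnP i.+1 (2 * m + 4)) => h1.
    rewrite (_ : (i < 2 * m + 4)%nat); [exact: lw_aa | lia].
  case: (ltnP i (2 * m + 4)) => h2 /=.
    rewrite (_ : i.+1 == (2 * m + 4)%nat); [exact: lw_ab | apply/eqP; lia].
  case: (eqVneq i (2 * m + 4)%nat) => h3 /=.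
    rewrite (_ : i.+1 == (2 * m + 4)%nat = false); [|apply/negbTE/eqP; lia].
    rewrite (_ : i.+1 == (2 * m + 5)%nat); [exact: lw_bc | apply/eqP; lia].
  rewrite (_ : i.+1 == (2 * m + 4)%nat = false); [|apply/negbTE/eqP; lia].
  case: (eqVneq i (2 * m + 5)%nat) => h4 /=.
    rewrite (_ : i.+1 == (2 * m + 5)%nat = false); [exact: lw_c4 | apply/negbTE/eqP; lia].
  rewrite (_ : i.+1 == (2 * m + 5)%nat = false); [exact: lw_44 | apply/negbTE/eqP; lia].
Qed.

Theorem mainTheorem3 (k : nat) : (2 <= k)%nat -> in_super_summit_set (beta k) (beta k).
Proof.
case: k => [|[|m]] // _.
split.
  by exists [::]; rewrite /= cats0; exact: beq_refl.
exists (4 * m.+2 - 1)%nat; split.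
  exists 0, (nfxs m); split; first exact: lnf_beta.
  by rewrite size_nf; lia.
move=> z r' [c hc] [p [xs [hl hs]]].
have hp := claimA hc hl.
rewrite -hs; exact: claimB hc hl hp.
Qed.
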